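(* Assume Hypotheses 1, 2 and 3 (see context). For any fixed $\mathbf{z}\in\mathbb{R}^m$, the map $\Gamma\to\mathbb{R}^n$, $x\mapsto H(x)\mathbf{z}$, is continuous.
   Context: System $\dot x=F(x)$ with $F=(f,g)$, i.e. $\dot a=f(a,z)$, $\dot z=g(a,z)$, $(a,z)\in\mathbb{R}^n\times\mathbb{R}^m$, $X=\mathbb{R}^n\times\mathbb{R}^m$, flow $\Phi(t,x)$. Euclidean inner product, norm, operator norm. $\mathcal{L}(x_1,x_2)=\|a_2-a_1\|^2-\|z_2-z_1\|^2$, $\mathcal{C}(x)=\{x'\in X:\mathcal{L}(x',x)\ge0\}$, $\mathbf{0}$ the zero vector of $X$; $\Pi(a,z)=a$, $\Pi_\perp(a,z)=z$; $\mathbb{B}_d(x)=\{(a',z'):\|a'-a\|\le d,\|z'-z\|\le d\}$. $\Gamma\subseteq U$ positively invariant means $\Phi(t,x)$ is defined for all $t\ge0$ for $x\in\Gamma$ and $\Phi(t,\Gamma)\subseteq\Gamma$. Hypothesis 1: $U$ open and convex, and there is $d>0$ with $\mathcal{C}(x)\cap U\subset\mathbb{B}_d(x)$ for all $x\in U$. Hypothesis 2: $f,g$ are $C^1$ on $U$; there exist continuous $\alpha>0$, $\ell\ge0$ on $U$ and $c_1>0$ with, for all $x\in U$: $\langle a',D_af(x)a'\rangle\ge\alpha(x)\|a'\|^2$; $\langle z',D_zg(x)z'\rangle\le\ell(x)\|z'\|^2$; $\alpha(x)\ge\ell(x)+\|D_zf(x)\|+\|D_ag(x)\|+c_1$. Hypothesis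 3: $\Gamma\subset U$ is positively invariant and $\Pi_\perp(\Gamma)=\Pi_\perp(U)$. For $x\in\Gamma$, $Q(t,x)$ ($t\ge0$) denotes the fundamental matrix solution of $\dot{\mathbf{x}}=DF(\Phi(t,x))\mathbf{x}$ with $Q(0,x)=I$, and $T(x):=\{\mathbf{x}\in X: \mathcal{L}(Q(t,x)\mathbf{x},\mathbf{0})\le0\text{ for all }t\ge0\}$. Under these hypotheses each $T(x)$ is a linear subspace meeting each slice $\{(\mathbf{a},\mathbf{z}):\mathbf{a}\in\mathbb{R}^n\}$ in exactly one point, so there is a unique linear map $H(x):\mathbb{R}^m\to\mathbb{R}^n$ with $T(x)=\{(H(x)\mathbf{z},\mathbf{z}):\mathbf{z}\in\mathbb{R}^m\}$. *)

(* Defs.v *)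
From Stdlib Require Import Reals ClassicalEpsilon.
From mathcomp Require Import ssreflect ssrfun ssrbool eqtype ssrnat seq fintype bigop.
Set Implicit Arguments. Unset Strict Implicit.

Local Open Scope R_scope.

Definition vec (n : nat) := 'I_n -> R.
Definition mat (m n : nat) := 'I_m -> 'I_n -> R.

Definition rsum (n : nat) (F : 'I_n -> R) : R := \big[Rplus/R0]_(i < n) F i.

Definition vdot n (u v : vec n) : R := rsum (fun i => u i * v i).
Definition vnorm n (u : vec n) : R := sqrt (vdot u u).
Definition vadd n (u v : vec n) : vec n := fun i => u i + v i.
Definition vsub n (u v : vec n) : vec n := fun i => u i - v i.
Definition vscal n (c : R) (u : vec n) : vec n := fun i => c * u i.
Definition vzero n : vec n := fun _ => 0.
Definition mapp m n (A : mat m n) (v : vec n) : vec m :=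
  fun i => rsum (fun j => A i j * v j).

Definition opnorm m n (A : mat m n) : R :=
  epsilon (inhabits 0)
    (is_lub (fun s => exists v : vec n, vnorm v <= 1 /\ s = vnorm (mapp A v))).

(* The phase space X = R^n x R^m, points x = (a, z) *)
Definition X (n m : nat) := (vec n * vec m)%type.
Definition xadd n m (x y : X n m) : X n m := (vadd x.1 y.1, vadd x.2 y.2).
Definition xsub n m (x y : X n m) : X n m := (vsub x.1 y.1, vsub x.2 y.2).
Definition xscal n m (c : R) (x : X n m) : X n m := (vscal c x.1, vscal c x.2).
Definition xnorm n m (x : X n m) : R := sqrt (vdot x.1 x.1 + vdot x.2 x.2).

Definition Lcone n m (x1 x2 : X n m) : R :=
  vnorm (vsub x2.1 x1.1) ^ 2 - vnorm (vsub x2.2 x1.2) ^ 2.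
Definition xzero n m : X n m := (@vzero n, @vzero m).

Definition ball_d n m (d : R) (x x' : X n m) : Prop :=
  vnorm (vsub x'.1 x.1) <= d /\ vnorm (vsub x'.2 x.2) <= d.

Definition is_open n m (U : X n m -> Prop) : Prop :=
  forall x, U x -> exists r, 0 < r /\ forall y, xnorm (xsub y x) < r -> U y.

Definition is_convex n m (U : X n m -> Prop) : Prop :=
  forall x y lam, U x -> U y -> 0 <= lam <= 1 ->
    U (xadd (xscal lam x) (xscal (1 - lam) y)).

Definition cont_on n m (S : X n m -> Prop) (h : X n m -> R) : Prop :=
  forall x, S x -> forall eps, 0 < eps -> exists delta, 0 < delta /\
    forall y, S y -> xnorm (xsub y x) < delta -> Rabs (h y - h x) < eps.

Definition cont_on_vec n m k (S : X n m -> Prop) (h : X n m -> vec k) : Prop :=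
  forall x, S x -> forall eps, 0 < eps -> exists delta, 0 < delta /\
    forall y, S y -> xnorm (xsub y x) < delta -> vnorm (vsub (h y) (h x)) < eps.

Definition frechet_at n m k (h : X n m -> vec k) (dh : X n m -> vec k) (x : X n m) : Prop :=
  forall eps, 0 < eps -> exists delta, 0 < delta /\
    forall y, xnorm (xsub y x) < delta ->
      vnorm (vsub (vsub (h y) (h x)) (dh (xsub y x))) <= eps * xnorm (xsub y x).

Definition solves_nonneg n m (y : R -> X n m) (V : R -> X n m -> X n m) : Prop :=
  (forall t, 0 < t ->
     (forall i : 'I_n, derivable_pt_lim (fun s => (y s).1 i) t ((V t (y t)).1 i)) /\
     (forall j : 'I_m, derivable_pt_lim (fun s => (y s).2 j) t ((V t (y t)).2 j))) /\
  (forall eps, 0 < eps -> exists delta, 0 < delta /\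
     forall t, 0 <= t < delta -> xnorm (xsub (y t) (y 0)) < eps).

Definition DFapp n m (Daf : X n m -> mat n n) (Dzf : X n m -> mat n m)
  (Dag : X n m -> mat m n) (Dzg : X n m -> mat m m) (p : X n m) (v : X n m) : X n m :=
  (vadd (mapp (Daf p) v.1) (mapp (Dzf p) v.2),
   vadd (mapp (Dag p) v.1) (mapp (Dzg p) v.2)).

(* Main.v *)
Require Import Defs.
From HB Require Import structures.
From Stdlib Require Import Reals Lra ClassicalEpsilon FunctionalExtensionality Classical.
From mathcomp Require Import ssreflect ssrfun ssrbool eqtype ssrnat seq fintype bigop.
Local Open Scope R_scope.
Set Implicit Arguments. Unset Strict Implicit.

Lemma Rplus_assoc' : associative Rplus. Proof. move=> a b c; ring. Qed.
HB.instance Definition Rplus_comlaw := Monoid.isComLaw.Build R 0 Rplus Rplus_assoc' Rplus_comm Rplus_0_l.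

Lemma rsum_ext n (F G : 'I_n -> R) : (forall i, F i = G i) -> rsum F = rsum G.
Proof. move=> H; rewrite /rsum; apply: eq_bigr => i _; exact: H. Qed.

Lemma rsum_add n (F G : 'I_n -> R) : rsum (fun i => F i + G i) = rsum F + rsum G.
Proof. rewrite /rsum. exact: big_split. Qed.

Lemma rsum_scal n c (F : 'I_n -> R) : rsum (fun i => c * F i) = c * rsum F.
Proof.
rewrite /rsum; apply: (big_rec2 (fun a b => a = c * b)); first by ring.
move=> i y1 y2 _ ->; ring.
Qed.

Lemma rsum_le n (F G : 'I_n -> R) : (forall i, F i <= G i) -> rsum F <= rsum G.
Proof.
move=> H; rewrite /rsum; apply: (big_rec2 (fun a b => a <= b)); first by lra.
move=> i y1 y2 _ h; have := H i; lra.
Qed.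

Lemma rsum_zero n : rsum (fun _ : 'I_n => 0) = 0.
Proof. rewrite /rsum; apply: big1 => i _; done. Qed.

Lemma rsum_nonneg n (F : 'I_n -> R) : (forall i, 0 <= F i) -> 0 <= rsum F.
Proof. move=> H; rewrite -(rsum_zero n); exact: rsum_le. Qed.

Lemma rsum_abs n (F : 'I_n -> R) : Rabs (rsum F) <= rsum (fun i => Rabs (F i)).
Proof.
rewrite /rsum; apply: (big_rec2 (fun a b => Rabs a <= b)); first by rewrite Rabs_R0; lra.
move=> i y1 y2 _ h; have := Rabs_triang (F i) y1; lra.
Qed.

Lemma rsum_term n (F : 'I_n -> R) i : (forall j, 0 <= F j) -> F i <= rsum F.
Proof.
move=> H; rewrite /rsum (bigD1 i) //=.
have : 0 <= \big[Rplus/R0]_(j < n | j != i) F j.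
  apply: (big_ind (fun a => 0 <= a)) => //; [lra| move=> a b; lra].
move=> h; rewrite -{1}(Rplus_0_r (F i)); apply: Rplus_le_compat_l; exact: h.
Qed.

Lemma rsum_sq_le n (F : 'I_n -> R) : rsum (fun i => F i * F i) <= rsum (fun i => Rabs (F i)) * rsum (fun i => Rabs (F i)).
Proof.
rewrite /rsum.
suff: (fun a b => a <= b * b /\ 0 <= b) (\big[Rplus/R0]_(i < n) (F i * F i)) (\big[Rplus/R0]_(i < n) Rabs (F i)) by case.
apply: (big_rec2 (fun a b => a <= b * b /\ 0 <= b)).
  by split; lra.
move=> i y1 y2 _ [h1 h2]; split.
  have e : F i * F i = Rabs (F i) * Rabs (F i) by rewrite -Rabs_mult Rabs_right; [|apply Rle_ge; apply Rle_0_sqr].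
  have := Rabs_pos (F i); nra.
have := Rabs_pos (F i); lra.
Qed.

Lemma abs_le_of_sq a b : 0 <= b -> a * a <= b * b -> Rabs a <= b.
Proof. move=> hb h; rewrite -(Rabs_right b); last lra. apply: Rsqr_le_abs_0; rewrite /Rsqr //. Qed.

Section V.
Variable n : nat.
Implicit Types u v w : vec n.

Lemma vdot_comm u v : vdot u v = vdot v u.
Proof. apply: rsum_ext => i; ring. Qed.
Lemma vdot_addl u v w : vdot (vadd u v) w = vdot u w + vdot v w.
Proof. rewrite /vdot -rsum_add; apply: rsum_ext => i; rewrite /vadd; ring. Qed.
Lemma vdot_addr u v w : vdot w (vadd u v) = vdot w u + vdot w v.
Proof. rewrite /vdot -rsum_add; apply: rsum_ext => i; rewrite /vadd; ring. Qed.
Lemma vdot_subl u v w : vdot (vsub u v) w = vdot u w - vdot v w.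
Proof. rewrite /vdot (rsum_ext (G := fun i => u i * w i + (-1) * (v i * w i))); last by move=> i; rewrite /vsub; ring.
 rewrite rsum_add rsum_scal; ring. Qed.
Lemma vdot_subr u v w : vdot w (vsub u v) = vdot w u - vdot w v.
Proof. rewrite vdot_comm vdot_subl (vdot_comm u) (vdot_comm v) //. Qed.
Lemma vdot_scall c u v : vdot (vscal c u) v = c * vdot u v.
Proof. rewrite /vdot -rsum_scal; apply: rsum_ext => i; rewrite /vscal; ring. Qed.
Lemma vdot_scalr c u v : vdot u (vscal c v) = c * vdot u v.
Proof. rewrite /vdot -rsum_scal; apply: rsum_ext => i; rewrite /vscal; ring. Qed.
Lemma vdot_self_nonneg u : 0 <= vdot u u.
Proof. apply: rsum_nonneg => i; apply: Rle_0_sqr. Qed.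
Lemma vnorm_nonneg u : 0 <= vnorm u.
Proof. exact: sqrt_pos. Qed.
Lemma vnorm_sq u : vnorm u * vnorm u = vdot u u.
Proof. rewrite /vnorm sqrt_sqrt //; exact: vdot_self_nonneg. Qed.
Lemma vnorm_pow2 u : vnorm u ^ 2 = vdot u u.
Proof. rewrite -vnorm_sq; ring. Qed.
Lemma vdot_zero_coord u : vdot u u = 0 -> forall i, u i = 0.
Proof.
move=> H i. have h := rsum_term (F := fun j => u j * u j) i (fun j => Rle_0_sqr (u j)).
rewrite -/(vdot u u) H in h. have := Rle_0_sqr (u i). rewrite /Rsqr => h2.
nra.
Qed.
Lemma vnorm_coord u i : Rabs (u i) <= vnorm u.
Proof.
have h := rsum_term (F := fun j => u j * u j) i (fun j => Rle_0_sqr (u j)).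
rewrite -/(vdot u u) -vnorm_sq in h.
apply: abs_le_of_sq; first exact: vnorm_nonneg. nra.
Qed.
Lemma vnorm_le_sumabs u : vnorm u <= rsum (fun i => Rabs (u i)).
Proof.
have h := rsum_sq_le u. rewrite -/(vdot u u) -vnorm_sq in h.
have := vnorm_nonneg u; have := rsum_nonneg (fun i => Rabs_pos (u i)). nra.
Qed.

Lemma CS u v : Rabs (vdot u v) <= vnorm u * vnorm v.
Proof.
have key : vdot u v * vdot u v <= vdot u u * vdot v v.
  case: (Req_dec (vdot v v) 0) => hv.
    have z := vdot_zero_coord hv.
    have -> : vdot u v = 0.
      rewrite /vdot -(rsum_zero n); apply: rsum_ext => i; rewrite z; ring.
    rewrite hv; lra.
  have pv : 0 < vdot v v by have := vdot_self_nonneg v; lra.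
  set l := vdot u v / vdot v v.
  have h := vdot_self_nonneg (vsub u (vscal l v)).
  rewrite vdot_subl !vdot_subr !vdot_scall !vdot_scalr (vdot_comm v u) in h.
  have e : l * vdot v v = vdot u v by rewrite /l; field; lra.
  have : 0 <= vdot u u - vdot u v * l by nra.
  move=> h2. have h3 : 0 <= vdot u u * vdot v v - vdot u v * (l * vdot v v) by nra.
  rewrite e in h3; lra.
apply: abs_le_of_sq; first by apply: Rmult_le_pos; exact: vnorm_nonneg.
rewrite (_ : vnorm u * vnorm v * (vnorm u * vnorm v) = (vnorm u * vnorm u) * (vnorm v * vnorm v)); last ring.
rewrite !vnorm_sq //.
Qed.

Lemma vdot_le u v : vdot u v <= vnorm u * vnorm v.
Proof. have := CS u v; have := Rle_abs (vdot u v); lra. Qed.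

Lemma vnorm_le_of_sq u (c : R) : 0 <= c -> vdot u u <= c * c -> vnorm u <= c.
Proof.
move=> hc h. rewrite -vnorm_sq in h. have := vnorm_nonneg u; nra.
Qed.

Lemma vnorm_add u v : vnorm (vadd u v) <= vnorm u + vnorm v.
Proof.
apply: vnorm_le_of_sq. have := vnorm_nonneg u; have := vnorm_nonneg v; lra.
rewrite vdot_addl !vdot_addr -!vnorm_sq (vdot_comm v u).
have := vdot_le u v. nra.
Qed.

Lemma vnorm_sub u v : vnorm (vsub u v) <= vnorm u + vnorm v.
Proof.
apply: vnorm_le_of_sq. have := vnorm_nonneg u; have := vnorm_nonneg v; lra.
rewrite vdot_subl !vdot_subr -!vnorm_sq (vdot_comm v u).
have := CS u v; have := Rle_abs (- vdot u v); rewrite Rabs_Ropp. nra.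
Qed.

Lemma vnorm_scal c u : vnorm (vscal c u) = Rabs c * vnorm u.
Proof.
rewrite /vnorm vdot_scall vdot_scalr -Rmult_assoc sqrt_mult.
- rewrite sqrt_Rsqr_abs //.
- apply: Rle_0_sqr.
- exact: vdot_self_nonneg.
Qed.

Lemma vsub_eq u v : vsub u v = vadd u (vscal (-1) v).
Proof. apply: functional_extensionality => i; rewrite /vsub /vadd /vscal; ring. Qed.

Lemma vnorm_tri u v w : vnorm (vsub u w) <= vnorm (vsub u v) + vnorm (vsub v w).
Proof.
have -> : vsub u w = vadd (vsub u v) (vsub v w).
  apply: functional_extensionality => i; rewrite /vsub /vadd; ring.
exact: vnorm_add.
Qed.

Lemma vnorm_subC u v : vnorm (vsub u v) = vnorm (vsub v u).
Proof.
have -> : vsub u v = vscal (-1) (vsub v u).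
  apply: functional_extensionality => i; rewrite /vsub /vscal; ring.
rewrite vnorm_scal Rabs_Ropp Rabs_R1; ring.
Qed.

Lemma vnorm_zero : vnorm (@vzero n) = 0.
Proof. rewrite /vnorm /vdot (rsum_ext (G := fun _ => 0)); last by move=> i; rewrite /vzero; ring.
 rewrite rsum_zero sqrt_0 //. Qed.

Lemma vsub0 u : vsub (@vzero n) u = vscal (-1) u.
Proof. apply: functional_extensionality => i; rewrite /vsub /vscal /vzero; ring. Qed.

Lemma vnorm_opp0 u : vnorm (vsub (@vzero n) u) = vnorm u.
Proof. rewrite vsub0 vnorm_scal Rabs_Ropp Rabs_R1; ring. Qed.

Lemma vnorm_ge_absdiff u v : Rabs (vnorm u - vnorm v) <= vnorm (vsub u v).
Proof.
have h1 : vnorm u <= vnorm (vsub u v) + vnorm v.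
  have e : u = vadd (vsub u v) v by apply: functional_extensionality => i; rewrite /vsub /vadd; ring.
  rewrite {1}e; exact: vnorm_add.
have h2 : vnorm v <= vnorm (vsub u v) + vnorm u.
  have e : v = vadd (vsub v u) u by apply: functional_extensionality => i; rewrite /vsub /vadd; ring.
  rewrite {1}e vnorm_subC; exact: vnorm_add.
apply: Rabs_le; lra.
Qed.
End V.

Section M.
Variables p q : nat.
Implicit Types A B : mat p q.

Definition msum A := rsum (fun i => rsum (fun j => Rabs (A i j))).

Lemma msum_nonneg A : 0 <= msum A.
Proof. apply: rsum_nonneg => i; apply: rsum_nonneg => j; exact: Rabs_pos. Qed.

Lemma mapp_bound A v : vnorm (mapp A v) <= msum A * vnorm v.
Proof.
apply: Rle_trans (vnorm_le_sumabs _) _.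
rewrite /msum -(Rmult_comm (vnorm v)) -rsum_scal; apply: rsum_le => i.
rewrite /mapp. apply: Rle_trans (rsum_abs _) _.
rewrite -rsum_scal; apply: rsum_le => j. rewrite Rabs_mult.
have := vnorm_coord v j; have := Rabs_pos (A i j); nra.
Qed.

Lemma mapp_add A u v : mapp A (vadd u v) = vadd (mapp A u) (mapp A v).
Proof. apply: functional_extensionality => i; rewrite /mapp /vadd -rsum_add; apply: rsum_ext => j; ring. Qed.
Lemma mapp_sub A u v : mapp A (vsub u v) = vsub (mapp A u) (mapp A v).
Proof. rewrite !vsub_eq mapp_add; congr vadd; apply: functional_extensionality => i;
 rewrite /mapp /vscal -rsum_scal; apply: rsum_ext => j; ring. Qed.
Lemma mapp_scal A c u : mapp A (vscal c u) = vscal c (mapp A u).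
Proof. apply: functional_extensionality => i; rewrite /mapp /vscal -rsum_scal; apply: rsum_ext => j; ring. Qed.
Lemma mapp_msub A B v : vsub (mapp A v) (mapp B v) = mapp (fun i j => A i j - B i j) v.
Proof. rewrite vsub_eq; apply: functional_extensionality => i; rewrite /mapp /vadd /vscal -rsum_scal -rsum_add; apply: rsum_ext => j; ring. Qed.

Lemma opnorm_spec A : is_lub (fun s => exists v : vec q, vnorm v <= 1 /\ s = vnorm (mapp A v)) (opnorm A).
Proof.
rewrite /opnorm; apply: epsilon_spec.
set E := (fun s => exists v : vec q, vnorm v <= 1 /\ s = vnorm (mapp A v)).
have hb : bound E.
  exists (msum A) => s [v [h1 ->]]. apply: Rle_trans (mapp_bound A v) _.
  have := msum_nonneg A; have := vnorm_nonneg v; nra.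
have hne : exists x, E x.
  exists (vnorm (mapp A (@vzero q))); exists (@vzero q); split => //; rewrite vnorm_zero; lra.
case: (@completeness E hb hne) => m hm; by exists m.
Qed.

Lemma opnorm_nonneg A : 0 <= opnorm A.
Proof. case: (opnorm_spec A) => h _; apply: h; exists (@vzero q); split; first by rewrite vnorm_zero; lra.
 rewrite (_ : mapp A (@vzero q) = @vzero p) ?vnorm_zero //.
 apply: functional_extensionality => i; rewrite /mapp /vzero (rsum_ext (G := fun _ => 0)) ?rsum_zero // => j; ring. Qed.

Lemma opnorm_bound A v : vnorm (mapp A v) <= opnorm A * vnorm v.
Proof.
case: (Req_dec (vnorm v) 0) => hv.
  have z : forall j, v j = 0 by apply: vdot_zero_coord; rewrite -vnorm_sq hv; ring.
  rewrite (_ : mapp A v = @vzero p) ?vnorm_zero; first by rewrite hv; lra.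
  apply: functional_extensionality => i; rewrite /mapp /vzero (rsum_ext (G := fun _ => 0)) ?rsum_zero // => j; rewrite z; ring.
have pv : 0 < vnorm v by have := vnorm_nonneg v; lra.
case: (opnorm_spec A) => h _.
have := h (vnorm (mapp A (vscal (/ vnorm v) v))).
rewrite mapp_scal !vnorm_scal Rabs_right; last by apply: Rle_ge; left; apply: Rinv_0_lt_compat.
move=> h2. have : / vnorm v * vnorm (mapp A v) <= opnorm A.
  apply: h2; exists (vscal (/ vnorm v) v); split; last by rewrite mapp_scal vnorm_scal Rabs_right //; apply: Rle_ge; left; apply: Rinv_0_lt_compat.
  rewrite vnorm_scal Rabs_right; last by apply: Rle_ge; left; apply: Rinv_0_lt_compat.
  rewrite Rinv_l; lra.
move=> h3. have := Rmult_le_compat_l (vnorm v) _ _ (Rlt_le _ _ pv) h3.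
rewrite -Rmult_assoc Rinv_r; lra.
Qed.
End M.

Lemma fin_delta k (P : 'I_k -> R -> Prop) :
  (forall i d d', 0 < d' <= d -> P i d -> P i d') -> (forall i, exists d, 0 < d /\ P i d) ->
  exists d, 0 < d /\ forall i, P i d.
Proof.
move=> mono H.
have gen : forall N, (N <= k)%N -> exists d, 0 < d /\ forall i : 'I_k, (i < N)%N -> P i d.
  elim=> [|N IH] hN.
    by exists 1; split; [lra| move=> i].
  have [d [dp hd]] := IH (ltnW hN).
  have [d0 [d0p hd0]] := H (Ordinal hN).
  exists (Rmin d d0); split; first by apply: Rmin_pos.
  move=> i hi. rewrite ltnS leq_eqVlt in hi. case/orP: hi => hi.
    have -> : i = Ordinal hN by apply: val_inj; exact/eqP.
    apply: mono hd0; split; [apply: Rmin_pos => // | apply: Rmin_r].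
  apply: mono (hd i hi); split; [apply: Rmin_pos => // | apply: Rmin_l].
have [d [dp hd]] := gen k (leqnn k). exists d; split => // i; exact: hd.
Qed.

Lemma fin_bound k (P : 'I_k -> R -> Prop) :
  (forall i M M', M <= M' -> P i M -> P i M') -> (forall i, exists M, P i M) ->
  exists M, forall i, P i M.
Proof.
move=> mono H.
have gen : forall N, (N <= k)%N -> exists M, forall i : 'I_k, (i < N)%N -> P i M.
  elim=> [|N IH] hN.
    by exists 0; move=> i.
  have [d hd] := IH (ltnW hN).
  have [d0 hd0] := H (Ordinal hN).
  exists (Rmax d d0).
  move=> i hi. rewrite ltnS leq_eqVlt in hi. case/orP: hi => hi.
    have -> : i = Ordinal hN by apply: val_inj; exact/eqP.
    apply: mono hd0; apply: Rmax_r.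
  apply: mono (hd i hi); apply: Rmax_l.
have [d hd] := gen k (leqnn k). exists d => i; exact: hd.
Qed.

Lemma real_ind (T : R) (Q : R -> Prop) :
  0 <= T ->
  (forall s t, s <= t -> Q t -> Q s) ->
  (forall s, s < 0 -> Q s) ->
  (forall tau, 0 <= tau <= T -> (forall s, s < tau -> Q s) -> exists eta, 0 < eta /\ Q (tau + eta)) ->
  Q T.
Proof.
move=> hT mono neg step.
set S := fun t => t <= T /\ Q t.
have hb : bound S by exists T => t [h _].
have hne : exists t, S t by exists (-1); split; [lra| apply: neg; lra].
case: (@completeness S hb hne) => sig [ub lub].
have sigT : sig <= T by apply: lub => t [h _].
have below : forall s, s < sig -> Q s.
  move=> s hs. apply: NNPP => nq.
  have : sig <= s.
    apply: lub => t [ht qt]. apply: Rnot_lt_le => lt. apply: nq; apply: mono qt; lra.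
  lra.
case: (Rle_lt_dec 0 sig) => hs0.
  have [eta [he qe]] := step sig (conj hs0 sigT) below.
  case: (Rle_lt_dec (sig + eta) T) => h.
    have : sig + eta <= sig by apply: ub; split.
    lra.
  apply: mono qe; lra.
have [eta [he qe]] := step 0 (conj (Rle_refl 0) hT) (fun s hs => neg s hs).
have qm : Q (Rmin eta T) by apply: mono qe; have := Rmin_l eta T; lra.
have : Rmin eta T <= sig by apply: ub; split; [apply: Rmin_r | done].
have : 0 <= Rmin eta T by apply: Rmin_glb; lra.
lra.
Qed.

Lemma nondecr (h h' : R -> R) (T : R) :
  0 <= T ->
  (forall t, 0 < t <= T -> derivable_pt_lim h t (h' t)) ->
  (forall t, 0 < t < T -> 0 <= h' t) ->
  (forall eps, 0 < eps -> exists delta, 0 < delta /\ forall t, 0 <= t < delta -> Rabs (h t - h 0) < eps) ->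
  h 0 <= h T.
Proof.
move=> hT hd hpos hc.
case: (Req_dec T 0) => [->|hT0]; first lra.
have hTp : 0 < T by lra.
have key : forall s, 0 < s < T -> h s <= h T.
  move=> s hs. have [c [e hc']] := @MVT_cor2 h h' s T (proj2 hs) (fun c hc => hd c ltac:(lra)).
  have := hpos c ltac:(lra). nra.
apply: Rnot_lt_le => lt.
have [d [dp hd2]] := hc (h 0 - h T) ltac:(lra).
set s := Rmin (d / 2) (T / 2).
have sp : 0 < s by apply: Rmin_pos; lra.
have s1 : s <= d / 2 by apply: Rmin_l.
have s2 : s <= T / 2 by apply: Rmin_r.
have := key s ltac:(lra). have := hd2 s ltac:(lra).
move=> h1 h2. have := Rle_abs (h 0 - h s). rewrite -Rabs_Ropp Ropp_minus_distr in h1 |- *. lra.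
Qed.

Section XN.
Variables n m : nat.
Implicit Types x y z : X n m.

Definition xsq x := vdot x.1 x.1 + vdot x.2 x.2.
Lemma xsq_nonneg x : 0 <= xsq x.
Proof. rewrite /xsq; have := vdot_self_nonneg x.1; have := vdot_self_nonneg x.2; lra. Qed.
Lemma xnorm_sq x : xnorm x * xnorm x = xsq x.
Proof. rewrite /xnorm sqrt_sqrt //; exact: xsq_nonneg. Qed.
Lemma xnorm_nonneg x : 0 <= xnorm x.
Proof. exact: sqrt_pos. Qed.
Lemma xnorm_sq2 x : xnorm x * xnorm x = vnorm x.1 * vnorm x.1 + vnorm x.2 * vnorm x.2.
Proof. rewrite xnorm_sq !vnorm_sq //. Qed.
Lemma xnorm_fst x : vnorm x.1 <= xnorm x.
Proof. have := xnorm_sq2 x; have := xnorm_nonneg x; have := vnorm_nonneg x.1; have := vnorm_nonneg x.2; nra. Qed.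
Lemma xnorm_snd x : vnorm x.2 <= xnorm x.
Proof. have := xnorm_sq2 x; have := xnorm_nonneg x; have := vnorm_nonneg x.1; have := vnorm_nonneg x.2; nra. Qed.
Lemma xnorm_le x : xnorm x <= vnorm x.1 + vnorm x.2.
Proof. have := xnorm_sq2 x; have := xnorm_nonneg x; have := vnorm_nonneg x.1; have := vnorm_nonneg x.2; nra. Qed.
Lemma xnorm_le_of_sq x c : 0 <= c -> xsq x <= c * c -> xnorm x <= c.
Proof. move=> hc h; rewrite -xnorm_sq in h; have := xnorm_nonneg x; nra. Qed.

Lemma xsq_add x y : xsq (xadd x y) <= 2 * xsq x + 2 * xsq y.
Proof.
rewrite /xsq /xadd /= !vdot_addl !vdot_addr (vdot_comm y.1) (vdot_comm y.2).
have := vdot_self_nonneg (vsub x.1 y.1); have := vdot_self_nonneg (vsub x.2 y.2).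
rewrite !vdot_subl !vdot_subr (vdot_comm y.1) (vdot_comm y.2). lra.
Qed.

Lemma xnorm_add x y : xnorm (xadd x y) <= xnorm x + xnorm y.
Proof.
apply: xnorm_le_of_sq; first by have := xnorm_nonneg x; have := xnorm_nonneg y; lra.
have e : (xnorm x + xnorm y) * (xnorm x + xnorm y) = xnorm x * xnorm x + xnorm y * xnorm y + 2 * (xnorm x * xnorm y) by ring.
rewrite e !xnorm_sq2 /xsq /xadd /= !vdot_addl !vdot_addr (vdot_comm y.1) (vdot_comm y.2).
have h1 := vdot_le x.1 y.1. have h2 := vdot_le x.2 y.2.
have h3 : vnorm x.1 * vnorm y.1 + vnorm x.2 * vnorm y.2 <= xnorm x * xnorm y.
  (* Cauchy-Schwarz in R^2 *)
  have hx := xnorm_sq2 x; have hy := xnorm_sq2 y.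
  have := xnorm_nonneg x; have := xnorm_nonneg y.
  have := vnorm_nonneg x.1; have := vnorm_nonneg y.1; have := vnorm_nonneg x.2; have := vnorm_nonneg y.2.
  move=> a b c d e' f.
  have : (vnorm x.1 * vnorm y.1 + vnorm x.2 * vnorm y.2) ^ 2 <= (xnorm x * xnorm y) ^ 2.
    have : 0 <= (vnorm x.1 * vnorm y.2 - vnorm x.2 * vnorm y.1) ^ 2 by apply: pow2_ge_0.
    have -> : (xnorm x * xnorm y) ^ 2 = (xnorm x * xnorm x) * (xnorm y * xnorm y) by ring.
    rewrite hx hy. nra.
  move=> hh. have : 0 <= xnorm x * xnorm y by nra.
  move=> hp. apply: Rsqr_incr_0_var; rewrite /Rsqr; nra.
rewrite -!vnorm_sq; nra.
Qed.

Lemma xsub_add x y : xsub x y = xadd x (xscal (-1) y).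
Proof. rewrite /xsub /xadd /xscal /=; congr pair; exact: vsub_eq. Qed.

Lemma xnorm_scal c x : xnorm (xscal c x) = Rabs c * xnorm x.
Proof.
rewrite /xnorm /xscal /= !vdot_scall !vdot_scalr.
rewrite (_ : c * (c * vdot x.1 x.1) + c * (c * vdot x.2 x.2) = (c * c) * (vdot x.1 x.1 + vdot x.2 x.2)); last ring.
rewrite sqrt_mult; [rewrite sqrt_Rsqr_abs //| apply: Rle_0_sqr| exact: xsq_nonneg].
Qed.

Lemma xnorm_subC x y : xnorm (xsub x y) = xnorm (xsub y x).
Proof.
have -> : xsub x y = xscal (-1) (xsub y x).
  rewrite /xsub /xscal /=; congr pair; apply: functional_extensionality => i; rewrite /vsub /vscal; ring.
rewrite xnorm_scal Rabs_Ropp Rabs_R1; ring.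
Qed.

Lemma xnorm_tri x y z : xnorm (xsub x z) <= xnorm (xsub x y) + xnorm (xsub y z).
Proof.
have -> : xsub x z = xadd (xsub x y) (xsub y z).
  rewrite /xsub /xadd /=; congr pair; apply: functional_extensionality => i; rewrite /vsub /vadd; ring.
exact: xnorm_add.
Qed.

Lemma xnorm_sub x y : xnorm (xsub x y) <= xnorm x + xnorm y.
Proof. rewrite xsub_add. apply: Rle_trans (xnorm_add _ _) _. rewrite xnorm_scal Rabs_Ropp Rabs_R1; lra. Qed.

Lemma xnorm_zero : xnorm (@xzero n m) = 0.
Proof.
rewrite /xnorm /xzero /=. have h1 := vnorm_zero n. have h2 := vnorm_zero m.
rewrite /vnorm in h1 h2. rewrite -(sqrt_0). congr sqrt.
have := vdot_self_nonneg (@vzero n). have := vdot_self_nonneg (@vzero m).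
have a := sqrt_eq_0 _ (vdot_self_nonneg (@vzero n)) h1.
have b := sqrt_eq_0 _ (vdot_self_nonneg (@vzero m)) h2. lra.
Qed.

Lemma Lcone_zero (u : X n m) : Lcone u (@xzero n m) = vdot u.1 u.1 - vdot u.2 u.2.
Proof. rewrite /Lcone /xzero /= !vnorm_opp0 -!vnorm_sq; ring. Qed.
End XN.

Lemma deriv_bigsum (I : Type) (r : seq I) (F : I -> R -> R) (F' : I -> R) t :
  (forall i, derivable_pt_lim (F i) t (F' i)) ->
  derivable_pt_lim (fun s => \big[Rplus/R0]_(i <- r) F i s) t (\big[Rplus/R0]_(i <- r) F' i).
Proof.
move=> H; elim: r => [|a r IH].
  rewrite big_nil. have -> : (fun s => \big[Rplus/R0]_(i <- [::]) F i s) = fun _ => 0.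
    by apply: functional_extensionality => s; rewrite big_nil.
  exact: derivable_pt_lim_const.
rewrite big_cons. have -> : (fun s => \big[Rplus/R0]_(i <- a :: r) F i s) = (fun s => F a s + \big[Rplus/R0]_(i <- r) F i s).
  by apply: functional_extensionality => s; rewrite big_cons.
exact: derivable_pt_lim_plus.
Qed.

Lemma deriv_rsum k (F : 'I_k -> R -> R) (F' : 'I_k -> R) t :
  (forall i, derivable_pt_lim (F i) t (F' i)) ->
  derivable_pt_lim (fun s => rsum (fun i => F i s)) t (rsum F').
Proof. move=> H; rewrite /rsum; exact: deriv_bigsum. Qed.

Lemma deriv_vdot k (u w : R -> vec k) (du dw : vec k) t :
  (forall i, derivable_pt_lim (fun s => u s i) t (du i)) ->
  (forall i, derivable_pt_lim (fun s => w s i) t (dw i)) ->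
  derivable_pt_lim (fun s => vdot (u s) (w s)) t (vdot du (w t) + vdot (u t) dw).
Proof.
move=> hu hw. rewrite /vdot -rsum_add.
apply: (deriv_rsum (F := fun i s => u s i * w s i)) => i.
have := derivable_pt_lim_mult (fun s => u s i) (fun s => w s i) t _ _ (hu i) (hw i).
rewrite /mult_fct. congr derivable_pt_lim; try ring.
Qed.

Lemma rsum_const k (c : R) : rsum (fun _ : 'I_k => c) = INR k * c.
Proof.
rewrite /rsum big_const_ord. elim: k => [|k IH]; first by rewrite /=; ring.
rewrite iterS IH S_INR; ring.
Qed.

Lemma rsum_le_const k (F : 'I_k -> R) c : (forall i, F i <= c) -> rsum F <= INR k * c.
Proof. move=> H; rewrite -rsum_const; exact: rsum_le. Qed.

Lemma cont_pt_eps f s : continuity_pt f s -> forall eps, 0 < eps -> exists delta, 0 < delta /\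
  forall x, Rabs (x - s) < delta -> Rabs (f x - f s) < eps.
Proof.
move=> H eps he. case: (H eps he) => d [hd Hd]. exists d; split => // x hx.
case: (Req_dec x s) => [->|ne]; first by rewrite Rminus_diag Rabs_R0.
apply: Hd; split; [split; [exact I| auto] | exact hx].
Qed.

Section XX.
Variables n m : nat.
Implicit Types x y u w : X n m.

Definition xdot x y := vdot x.1 y.1 + vdot x.2 y.2.

Lemma xdot_le x y : xdot x y <= xnorm x * xnorm y.
Proof.
rewrite /xdot. have h1 := vdot_le x.1 y.1. have h2 := vdot_le x.2 y.2.
have hx := xnorm_sq2 x; have hy := xnorm_sq2 y.
have := xnorm_nonneg x; have := xnorm_nonneg y.
have := vnorm_nonneg x.1; have := vnorm_nonneg y.1; have := vnorm_nonneg x.2; have := vnorm_nonneg y.2.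
move=> a b c d e' f.
have : (vnorm x.1 * vnorm y.1 + vnorm x.2 * vnorm y.2) ^ 2 <= (xnorm x * xnorm y) ^ 2.
  have : 0 <= (vnorm x.1 * vnorm y.2 - vnorm x.2 * vnorm y.1) ^ 2 by apply: pow2_ge_0.
  have -> : (xnorm x * xnorm y) ^ 2 = (xnorm x * xnorm x) * (xnorm y * xnorm y) by ring.
  rewrite hx hy. nra.
move=> hh. have : 0 <= xnorm x * xnorm y by nra.
move=> hp. have : vnorm x.1 * vnorm y.1 + vnorm x.2 * vnorm y.2 <= xnorm x * xnorm y.
  apply: Rsqr_incr_0_var; rewrite /Rsqr; nra.
lra.
Qed.

Lemma xdot_abs x y : Rabs (xdot x y) <= xnorm x * xnorm y.
Proof.
apply: Rabs_le; split; last exact: xdot_le.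
have := xdot_le (xscal (-1) x) y. rewrite xnorm_scal Rabs_Ropp Rabs_R1 /xdot /xscal /= !vdot_scall. lra.
Qed.

Lemma sqdiff k (a b : vec k) : Rabs (vdot a a - vdot b b) <= vnorm (vsub a b) * (vnorm a + vnorm b).
Proof.
have -> : vdot a a - vdot b b = vdot (vsub a b) (vadd a b).
  rewrite vdot_subl !vdot_addr (vdot_comm b a); ring.
apply: Rle_trans (CS _ _) _. apply: Rmult_le_compat_l; first exact: vnorm_nonneg. exact: vnorm_add.
Qed.

Lemma L_diff u w : Rabs (Lcone u (@xzero n m) - Lcone w (@xzero n m)) <= 2 * xnorm (xsub u w) * (xnorm u + xnorm w).
Proof.
rewrite !Lcone_zero.
have h1 := sqdiff u.1 w.1. have h2 := sqdiff u.2 w.2.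
have a1 : vnorm (vsub u.1 w.1) <= xnorm (xsub u w) by exact: (xnorm_fst (xsub u w)).
have a2 : vnorm (vsub u.2 w.2) <= xnorm (xsub u w) by exact: (xnorm_snd (xsub u w)).
have := xnorm_fst u; have := xnorm_snd u; have := xnorm_fst w; have := xnorm_snd w.
have := vnorm_nonneg u.1; have := vnorm_nonneg u.2; have := vnorm_nonneg w.1; have := vnorm_nonneg w.2.
have := vnorm_nonneg (vsub u.1 w.1); have := vnorm_nonneg (vsub u.2 w.2).
have := Rabs_triang (vdot u.1 u.1 - vdot w.1 w.1) (-(vdot u.2 u.2 - vdot w.2 w.2)).
rewrite Rabs_Ropp. move=> t *.
have e : vdot u.1 u.1 - vdot u.2 u.2 - (vdot w.1 w.1 - vdot w.2 w.2) = vdot u.1 u.1 - vdot w.1 w.1 + - (vdot u.2 u.2 - vdot w.2 w.2) by ring.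
rewrite e. nra.
Qed.

Lemma xsq_diff u w : Rabs (xsq u - xsq w) <= 2 * xnorm (xsub u w) * (xnorm u + xnorm w).
Proof.
rewrite /xsq.
have h1 := sqdiff u.1 w.1. have h2 := sqdiff u.2 w.2.
have a1 : vnorm (vsub u.1 w.1) <= xnorm (xsub u w) by exact: (xnorm_fst (xsub u w)).
have a2 : vnorm (vsub u.2 w.2) <= xnorm (xsub u w) by exact: (xnorm_snd (xsub u w)).
have := xnorm_fst u; have := xnorm_snd u; have := xnorm_fst w; have := xnorm_snd w.
have := vnorm_nonneg u.1; have := vnorm_nonneg u.2; have := vnorm_nonneg w.1; have := vnorm_nonneg w.2.
have := vnorm_nonneg (vsub u.1 w.1); have := vnorm_nonneg (vsub u.2 w.2).
have := Rabs_triang (vdot u.1 u.1 - vdot w.1 w.1) (vdot u.2 u.2 - vdot w.2 w.2).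
move=> t *.
have e : vdot u.1 u.1 + vdot u.2 u.2 - (vdot w.1 w.1 + vdot w.2 w.2) = vdot u.1 u.1 - vdot w.1 w.1 + (vdot u.2 u.2 - vdot w.2 w.2) by ring.
rewrite e. nra.
Qed.

Lemma xnorm_coords x y : xnorm (xsub x y) <= rsum (fun i => Rabs (x.1 i - y.1 i)) + rsum (fun j => Rabs (x.2 j - y.2 j)).
Proof.
apply: Rle_trans (xnorm_le _) _.
have := vnorm_le_sumabs (xsub x y).1. have := vnorm_le_sumabs (xsub x y).2. rewrite /xsub /vsub /=. lra.
Qed.

Lemma sol_cont (y : R -> X n m) V : solves_nonneg y V ->
  forall s, 0 <= s -> forall eps, 0 < eps -> exists delta, 0 < delta /\
    forall s', 0 <= s' -> Rabs (s' - s) < delta -> xnorm (xsub (y s') (y s)) < eps.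
Proof.
move=> [Hd Hc] s hs eps he.
case: (Req_dec s 0) => [->|ns].
  have [d [dp Hd2]] := Hc eps he. exists d; split => // s' h1 h2.
  apply: Hd2; split => //; have := Rle_abs (s' - 0); lra.
have sp : 0 < s by lra.
have [D1 H1] := Hd s sp.
set e' := eps / (INR n + INR m + 1).
have pos : 0 < INR n + INR m + 1 by have := pos_INR n; have := pos_INR m; lra.
have e'p : 0 < e' by apply: Rdiv_lt_0_compat.
have c1 : forall i, exists d, 0 < d /\ (fun i d => forall s', Rabs (s' - s) < d -> Rabs ((y s').1 i - (y s).1 i) < e') i d.
  move=> i. apply: cont_pt_eps e'p. apply: derivable_continuous_pt. exists ((V s (y s)).1 i). exact: D1.
have c2 : forall j, exists d, 0 < d /\ (fun j d => forall s', Rabs (s' - s) < d -> Rabs ((y s').2 j - (y s).2 j) < e') j d.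
  move=> j. apply: cont_pt_eps e'p. apply: derivable_continuous_pt. exists ((V s (y s)).2 j). exact: (proj2 (Hd s sp)).
case: (fin_delta _ c1) => [i d d' hd h s' hs'|d1 [d1p P1]]; first by apply: h; lra.
case: (fin_delta _ c2) => [i d d' hd h s' hs'|d2 [d2p P2]]; first by apply: h; lra.
exists (Rmin d1 d2); split; first by apply: Rmin_pos.
move=> s' _ hs'. apply: Rle_lt_trans (xnorm_coords _ _) _.
have := rsum_le_const (fun i => Rlt_le _ _ (P1 i s' ltac:(have := Rmin_l d1 d2; lra))).
have := rsum_le_const (fun j => Rlt_le _ _ (P2 j s' ltac:(have := Rmin_r d1 d2; lra))).
have ee : (INR n + INR m + 1) * e' = eps by rewrite /e'; field; lra.
have := pos_INR n; have := pos_INR m. nra.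
Qed.
End XX.

Definition rc (h : R -> R) := forall eps, 0 < eps -> exists delta, 0 < delta /\
  forall t, 0 <= t < delta -> Rabs (h t - h 0) < eps.

Lemma rc_of_cont h : continuity_pt h 0 -> rc h.
Proof. move=> H eps he; have [d [dp Hd]] := cont_pt_eps H he; exists d; split => // t ht; apply: Hd.
  rewrite Rminus_0_r Rabs_right; lra. Qed.

Lemma rc_plus h1 h2 : rc h1 -> rc h2 -> rc (fun t => h1 t + h2 t).
Proof.
move=> H1 H2 eps he. have [d1 [d1p P1]] := H1 (eps/2) ltac:(lra). have [d2 [d2p P2]] := H2 (eps/2) ltac:(lra).
exists (Rmin d1 d2); split; first by apply: Rmin_pos.
move=> t ht. have := P1 t ltac:(have := Rmin_l d1 d2; lra). have := P2 t ltac:(have := Rmin_r d1 d2; lra).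
have := Rabs_triang (h1 t - h1 0) (h2 t - h2 0).
have -> : h1 t + h2 t - (h1 0 + h2 0) = h1 t - h1 0 + (h2 t - h2 0) by ring. lra.
Qed.

Lemma rc_scal c h : rc h -> rc (fun t => c * h t).
Proof.
move=> H eps he. have [d [dp P]] := H (eps / (Rabs c + 1)) ltac:(apply: Rdiv_lt_0_compat => //; have := Rabs_pos c; lra).
exists d; split => // t ht. have := P t ht.
rewrite -Rmult_minus_distr_l Rabs_mult => h1.
have hc := Rabs_pos c.
have e : Rabs c * (eps / (Rabs c + 1)) < eps.
  rewrite /Rdiv -Rmult_assoc. apply: (Rmult_lt_reg_r (Rabs c + 1)); first lra.
  rewrite Rmult_assoc Rinv_l; lra.
have := Rabs_pos (h t - h 0). nra.
Qed.

Lemma rc_mult h1 h2 : rc h1 -> rc h2 -> rc (fun t => h1 t * h2 t).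
Proof.
move=> H1 H2 eps he.
set a0 := h1 0. set b0 := h2 0.
have pa := Rabs_pos a0. have pb := Rabs_pos b0.
have [d1 [d1p P1]] := H1 (eps / (2 * (Rabs b0 + 1))) ltac:(apply: Rdiv_lt_0_compat; lra).
have [d2 [d2p P2]] := H2 (Rmin 1 (eps / (2 * (Rabs a0 + 1)))) ltac:(apply: Rmin_pos; [lra| apply: Rdiv_lt_0_compat; lra]).
exists (Rmin d1 d2); split; first by apply: Rmin_pos.
move=> t ht. have q1 := P1 t ltac:(have := Rmin_l d1 d2; lra). have q2 := P2 t ltac:(have := Rmin_r d1 d2; lra).
have q2a : Rabs (h2 t - b0) < 1 by have := Rmin_l 1 (eps / (2 * (Rabs a0 + 1))); rewrite /b0; lra.
have q2b : Rabs (h2 t - b0) < eps / (2 * (Rabs a0 + 1)) by have := Rmin_r 1 (eps / (2 * (Rabs a0 + 1))); rewrite /b0; lra.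
have hb : Rabs (h2 t) <= Rabs b0 + 1.
  have := Rabs_triang (h2 t - b0) b0. have -> : h2 t - b0 + b0 = h2 t by ring. lra.
have -> : h1 t * h2 t - h1 0 * h2 0 = (h1 t - a0) * h2 t + a0 * (h2 t - b0) by rewrite /a0 /b0; ring.
apply: Rle_lt_trans (Rabs_triang _ _) _. rewrite !Rabs_mult.
have e1 : Rabs (h1 t - a0) * Rabs (h2 t) <= eps / (2 * (Rabs b0 + 1)) * (Rabs b0 + 1).
  apply: Rmult_le_compat; try apply: Rabs_pos; rewrite /a0; lra.
have e2 : Rabs a0 * Rabs (h2 t - b0) <= (Rabs a0 + 1) * (eps / (2 * (Rabs a0 + 1))).
  apply: Rmult_le_compat; try apply: Rabs_pos; lra.
have f1 : eps / (2 * (Rabs b0 + 1)) * (Rabs b0 + 1) = eps / 2 by field; lra.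
have f2 : (Rabs a0 + 1) * (eps / (2 * (Rabs a0 + 1))) = eps / 2 by field; lra.
have : Rabs a0 * Rabs (h2 t - b0) < (Rabs a0 + 1) * (eps / (2 * (Rabs a0 + 1))).
  case: (Req_dec (Rabs a0) 0) => z. rewrite z; have : 0 < eps / (2 * (0 + 1)) by apply: Rdiv_lt_0_compat; lra. lra.
  have : 0 < Rabs a0 by have := Rabs_pos a0; lra. move=> hz. have : 0 < eps / (2 * (Rabs a0 + 1)) by apply: Rdiv_lt_0_compat; lra. have := Rabs_pos (h2 t - b0). nra.
lra.
Qed.

Lemma rc_ext h1 h2 : (forall t, 0 <= t -> h1 t = h2 t) -> rc h1 -> rc h2.
Proof. move=> e H eps he; have [d [dp P]] := H eps he; exists d; split => // t ht; rewrite -!e; try lra; exact: P. Qed.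

Lemma deriv_expk k t : derivable_pt_lim (fun s => exp (k * s)) t (k * exp (k * t)).
Proof.
have h1 : derivable_pt_lim (fun s => k * s) t k.
  have := derivable_pt_lim_scal id k t 1 (derivable_pt_lim_id t). rewrite Rmult_1_r. by [].
have := derivable_pt_lim_comp (fun s => k * s) exp t k (exp (k * t)) h1 (derivable_pt_lim_exp _).
rewrite /comp Rmult_comm. by [].
Qed.

Lemma gronwall (D D' : R -> R) c T : 0 <= T ->
  (forall t, 0 < t <= T -> derivable_pt_lim D t (D' t)) ->
  (forall t, 0 < t < T -> D' t <= c * D t) -> rc D -> D T <= D 0 * exp (c * T).
Proof.
move=> hT hd hle hrc.
set h := fun t => - (D t * exp (- c * t)).
set h' := fun t => - (D' t * exp (- c * t) + D t * (- c * exp (- c * t))).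
have dh : forall t, 0 < t <= T -> derivable_pt_lim h t (h' t).
  move=> t ht. apply: derivable_pt_lim_opp. apply: derivable_pt_lim_mult; first exact: hd.
  exact: deriv_expk.
have hp : forall t, 0 < t < T -> 0 <= h' t.
  move=> t ht. rewrite /h'. have := hle t ht. have := exp_pos (- c * t). nra.
have rch : rc h.
  have r1 : rc (fun t => exp (- c * t)).
    apply: rc_of_cont. apply: derivable_continuous_pt. exists (- c * exp (- c * 0)). exact: deriv_expk.
  apply: (rc_ext _ (rc_scal (-1) (rc_mult hrc r1))) => t _; rewrite /h; ring.
have := nondecr hT dh hp rch. rewrite /h Rmult_0_r exp_0 Rmult_1_r.
move=> H. have e : exp (- c * T) * exp (c * T) = 1.
  rewrite -exp_plus. have -> : - c * T + c * T = 0 by ring. exact: exp_0.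
have hE := exp_pos (c * T). have := Rmult_le_compat_r _ _ _ (Rlt_le _ _ hE) (Ropp_le_cancel _ _ H). rewrite Rmult_assoc e Rmult_1_r. lra.
Qed.

Section G.
Variables n m : nat.

Lemma tube (U : X n m -> Prop) (HU : is_open U) (h : X n m -> R) (hc : cont_on U h)
  (gam : R -> X n m) T (hT : 0 <= T) (hgU : forall s, 0 <= s <= T -> U (gam s))
  (hgc : forall s, 0 <= s <= T -> forall eps, 0 < eps -> exists delta, 0 < delta /\
      forall s', 0 <= s' <= T -> Rabs (s' - s) < delta -> xnorm (xsub (gam s') (gam s)) < eps) :
  forall eps, 0 < eps -> exists delta, 0 < delta /\ exists M, forall s, 0 <= s <= T ->
    forall p, xnorm (xsub p (gam s)) < delta -> U p /\ Rabs (h p - h (gam s)) < eps /\ Rabs (h p) <= M.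
Proof.
move=> eps he.
set Q := fun t => exists delta, 0 < delta /\ exists M, forall s, 0 <= s <= t -> s <= T ->
    forall p, xnorm (xsub p (gam s)) < delta -> U p /\ Rabs (h p - h (gam s)) < eps /\ Rabs (h p) <= M.
suff : Q T.
  move=> [d [dp [M HM]]]; exists d; split => //; exists M => s hs; apply: HM => //; lra.
apply: real_ind => //.
- move=> s t st [d [dp [M HM]]]; exists d; split => //; exists M => s' hs' hT'; apply: HM => //; lra.
- move=> s hs; exists 1; split; first lra; exists 0 => s' hs'; lra.
move=> tau htau below.
have [r0 [r0p Hr0]] := HU _ (hgU tau htau).
have [d1 [d1p Hd1]] := hc _ (hgU tau htau) (eps / 2) ltac:(lra).
set d0 := Rmin r0 d1.
have d0p : 0 < d0 by apply: Rmin_pos.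
have [eta [etap Heta]] := hgc tau htau (d0 / 2) ltac:(lra).
have [d' [d'p [M' HM']]] := below (tau - eta / 2) ltac:(lra).
exists (eta / 2); split; first lra.
exists (Rmin d' (d0 / 2)); split; first by apply: Rmin_pos; lra.
exists (Rmax M' (Rabs (h (gam tau)) + eps / 2)).
move=> s hs hsT p hp.
case: (Rle_lt_dec s (tau - eta / 2)) => hs2.
  have [a [b c]] := HM' s ltac:(lra) hsT p ltac:(have := Rmin_l d' (d0 / 2); lra).
  split => //; split => //. have := Rmax_l M' (Rabs (h (gam tau)) + eps / 2); lra.
have hgs : xnorm (xsub (gam s) (gam tau)) < d0 / 2.
  apply: Heta; first lra. apply: Rabs_def1; lra.
have hpd : xnorm (xsub p (gam s)) < d0 / 2 by have := Rmin_r d' (d0 / 2); lra.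
have hpt : xnorm (xsub p (gam tau)) < d0 by have := xnorm_tri p (gam s) (gam tau); lra.
have hUp : U p by apply: Hr0; have := Rmin_l r0 d1; rewrite -/d0; lra.
have hUs : U (gam s) by apply: hgU; lra.
have e1 : Rabs (h p - h (gam tau)) < eps / 2 by apply: Hd1 => //; have := Rmin_r r0 d1; rewrite -/d0; lra.
have e2 : Rabs (h (gam s) - h (gam tau)) < eps / 2 by apply: Hd1 => //; have := Rmin_r r0 d1; rewrite -/d0; lra.
split => //; split.
  have := Rabs_triang (h p - h (gam tau)) (h (gam tau) - h (gam s)).
  rewrite -(Rabs_Ropp (h (gam tau) - h (gam s))) Ropp_minus_distr in e2 * => t.
  have -> : h p - h (gam s) = h p - h (gam tau) + (h (gam tau) - h (gam s)) by ring. lra.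
have := Rmax_r M' (Rabs (h (gam tau)) + eps / 2).
have := Rabs_triang (h p - h (gam tau)) (h (gam tau)).
have -> : h p - h (gam tau) + h (gam tau) = h p by ring. lra.
Qed.

Lemma xline (p d : X n m) a b : xsub (xadd p (xscal a d)) (xadd p (xscal b d)) = xscal (a - b) d.
Proof. rewrite /xsub /xadd /xscal /=; congr pair; apply: functional_extensionality => i; rewrite /vsub /vadd /vscal; ring. Qed.

Lemma frechet_line k (F : X n m -> vec k) (DF : X n m -> vec k) p d (e : vec k) th :
  frechet_at F DF (xadd p (xscal th d)) ->
  (forall h v, DF (xscal h v) = vscal h (DF v)) ->
  derivable_pt_lim (fun t => vdot e (F (xadd p (xscal t d)))) th (vdot e (DF d)).
Proof.
move=> Hf Hlin eps he.
set c := vnorm e * xnorm d + 1.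
have cp : 0 < c by have := vnorm_nonneg e; have := xnorm_nonneg d; rewrite /c; nra.
have [df [dfp Hdf]] := Hf (eps / (2 * c)) ltac:(apply: Rdiv_lt_0_compat; lra).
have dp : 0 < df / (xnorm d + 1) by apply: Rdiv_lt_0_compat => //; have := xnorm_nonneg d; lra.
exists (mkposreal _ dp) => h hn hh. simpl in hh.
have ex : xsub (xadd p (xscal (th + h) d)) (xadd p (xscal th d)) = xscal h d.
  rewrite xline; congr xscal; ring.
have hx : xnorm (xscal h d) < df.
  rewrite xnorm_scal. have := xnorm_nonneg d. have := Rabs_pos h.
  move=> a b. have : Rabs h * (xnorm d + 1) < df.
    have := Rmult_lt_compat_r (xnorm d + 1) _ _ ltac:(lra) hh. rewrite /Rdiv Rmult_assoc Rinv_l; lra.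
  nra.
have := Hdf (xadd p (xscal (th + h) d)). rewrite ex => H1. have {}H1 := H1 hx.
rewrite Hlin in H1.
set F1 := F (xadd p (xscal (th + h) d)). set F0 := F (xadd p (xscal th d)).
have eq : (vdot e F1 - vdot e F0) / h - vdot e (DF d) = vdot e (vsub (vsub F1 F0) (vscal h (DF d))) / h.
  rewrite !vdot_subr vdot_scalr. field. done.
rewrite xnorm_scal in H1. rewrite eq /Rdiv Rabs_mult Rabs_inv.
have hp : 0 < Rabs h by apply: Rabs_pos_lt.
apply: (Rmult_lt_reg_r (Rabs h)) => //. rewrite Rmult_assoc Rinv_l; last lra. rewrite Rmult_1_r.
apply: Rle_lt_trans (CS _ _) _.
have := vnorm_nonneg e.
have : eps / (2 * c) * (Rabs h * xnorm d) * vnorm e < eps * Rabs h.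
  have : xnorm d * vnorm e < c by rewrite /c; have := vnorm_nonneg e; have := xnorm_nonneg d; nra.
  move=> hc. rewrite /Rdiv. have := Rinv_0_lt_compat (2 * c) ltac:(lra). move=> hi.
  have -> : eps * / (2 * c) * (Rabs h * xnorm d) * vnorm e = (eps * Rabs h) * (xnorm d * vnorm e) * / (2 * c) by ring.
  have : (eps * Rabs h) * (xnorm d * vnorm e) * / (2 * c) <= (eps * Rabs h) * c * / (2 * c).
    apply: Rmult_le_compat_r; first lra. apply: Rmult_le_compat_l; nra.
  have -> : eps * Rabs h * c * / (2 * c) = eps * Rabs h / 2 by field; lra.
  nra.
move=> h1 h2. rewrite /F1 /F0 in H1 *. have := Rmult_le_compat_l (vnorm e) _ _ h2 H1. lra.
Qed.

Lemma seg_lip (f : X n m -> vec n) (g : X n m -> vec m) (Df : X n m -> X n m -> vec n) (Dg : X n m -> X n m -> vec m)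
  p1 p2 M :
  (forall th, 0 <= th <= 1 ->
     frechet_at f (Df (xadd p2 (xscal th (xsub p1 p2)))) (xadd p2 (xscal th (xsub p1 p2))) /\
     frechet_at g (Dg (xadd p2 (xscal th (xsub p1 p2)))) (xadd p2 (xscal th (xsub p1 p2))) /\
     (forall h v, Df (xadd p2 (xscal th (xsub p1 p2))) (xscal h v) = vscal h (Df (xadd p2 (xscal th (xsub p1 p2))) v)) /\
     (forall h v, Dg (xadd p2 (xscal th (xsub p1 p2))) (xscal h v) = vscal h (Dg (xadd p2 (xscal th (xsub p1 p2))) v)) /\
     xnorm (Df (xadd p2 (xscal th (xsub p1 p2))) (xsub p1 p2), Dg (xadd p2 (xscal th (xsub p1 p2))) (xsub p1 p2)) <= M * xnorm (xsub p1 p2)) ->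
  xnorm (xsub (f p1, g p1) (f p2, g p2)) <= M * xnorm (xsub p1 p2).
Proof.
move=> H.
set d := xsub p1 p2.
set e := xsub (f p1, g p1) (f p2, g p2).
set phi := fun t => vdot e.1 (f (xadd p2 (xscal t d))) + vdot e.2 (g (xadd p2 (xscal t d))).
set phi' := fun t => vdot e.1 (Df (xadd p2 (xscal t d)) d) + vdot e.2 (Dg (xadd p2 (xscal t d)) d).
have hder : forall t, 0 <= t <= 1 -> derivable_pt_lim phi t (phi' t).
  move=> t ht. have [a [b [c [c' _]]]] := H t ht.
  apply: derivable_pt_lim_plus; [exact: frechet_line | exact: frechet_line].
have [c [hc hc']] := @MVT_cor2 phi phi' 0 1 Rlt_0_1 hder.
have e1 : forall q : X n m, xadd p2 (xscal 1 q) = xadd p2 q.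
  move=> q; rewrite /xadd /xscal /=; congr pair; apply: functional_extensionality => i; rewrite /vadd /vscal; ring.
have e0 : forall q : X n m, xadd p2 (xscal 0 q) = p2.
  move=> q; rewrite /xadd /xscal /=; rewrite [RHS]surjective_pairing; congr pair; apply: functional_extensionality => i; rewrite /vadd /vscal; ring.
have ep1 : xadd p2 d = p1.
  rewrite /d /xadd /xsub /= [RHS]surjective_pairing; congr pair; apply: functional_extensionality => i; rewrite /vadd /vsub; ring.
have hphi : phi 1 - phi 0 = xsq e.
  rewrite /phi e1 e0 ep1 /xsq /e /xsub /= !vdot_subr; ring.
have hM : phi' c <= xnorm e * (M * xnorm d).
  have [_ [_ [_ [_ hb]]]] := H c ltac:(lra).
  apply: Rle_trans (xdot_le e (Df (xadd p2 (xscal c d)) d, Dg (xadd p2 (xscal c d)) d)) _.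
  apply: Rmult_le_compat_l; first exact: xnorm_nonneg. exact: hb.
rewrite hphi Rminus_0_r Rmult_1_r -xnorm_sq in hc.
have ne := xnorm_nonneg e.
have [_ [_ [_ [_ hb]]]] := H 0 ltac:(lra).
have hK : 0 <= M * xnorm d.
  apply: Rle_trans (xnorm_nonneg _) _. exact: hb.
rewrite -hc in hM. rewrite -/d -/e.
case: (Req_dec (xnorm e) 0) => z; first by rewrite z.
have : 0 < xnorm e by lra.
move=> pe. apply: (Rmult_le_reg_l (xnorm e)) => //.
Qed.
End G.

Lemma entries_tube n m p q (U : X n m -> Prop) (HU : is_open U) (A : X n m -> mat p q)
  (hc : forall i j, cont_on U (fun x => A x i j))
  (gam : R -> X n m) T (hT : 0 <= T) (hgU : forall s, 0 <= s <= T -> U (gam s))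
  (hgc : forall s, 0 <= s <= T -> forall eps, 0 < eps -> exists delta, 0 < delta /\
      forall s', 0 <= s' <= T -> Rabs (s' - s) < delta -> xnorm (xsub (gam s') (gam s)) < eps) :
  forall eps, 0 < eps -> exists delta, 0 < delta /\ exists M, forall s, 0 <= s <= T ->
    forall z, xnorm (xsub z (gam s)) < delta ->
      U z /\ msum (fun i j => A z i j - A (gam s) i j) <= eps /\ msum (A z) <= M.
Proof.
move=> eps he.
set K := INR p * INR q + 1.
have Kp : 0 < K by have := pos_INR p; have := pos_INR q; rewrite /K; nra.
set e' := eps / K.
have e'p : 0 < e' by apply: Rdiv_lt_0_compat.
have one : forall i j, exists d, 0 < d /\ (fun i j d => exists M, forall s, 0 <= s <= T -> forall z, xnorm (xsub z (gam s)) < d ->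
   U z /\ Rabs (A z i j - A (gam s) i j) < e' /\ Rabs (A z i j) <= M) i j d.
  move=> i j. have [d [dp [M HM]]] := tube HU (hc i j) hT hgU hgc e'p. exists d; split => //; by exists M.
have rowd : forall i, exists d, 0 < d /\ (fun i d => forall j, exists M, forall s, 0 <= s <= T -> forall z, xnorm (xsub z (gam s)) < d ->
   U z /\ Rabs (A z i j - A (gam s) i j) < e' /\ Rabs (A z i j) <= M) i d.
  move=> i. case: (fin_delta _ (one i)) => [j d d' hd [M HM]|d [dp Hd]].
    exists M => s hs z hz; apply: HM => //; lra.
  by exists d.
case: (fin_delta _ rowd) => [i d d' hd HH j|d [dp Hd]].
  have [M HM] := HH j. exists M => s hs z hz; apply: HM => //; lra.
have cc : cont_on U (fun _ : X n m => 0).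
  move=> x _ e0 he0; exists 1; split; [lra| move=> y _ _ /=; rewrite Rminus_0_r Rabs_R0; lra].
have [du [dup [Mu Hu]]] := tube HU cc hT hgU hgc Rlt_0_1.
exists (Rmin d du); split; first by apply: Rmin_pos.
have allM : forall i, exists M, (fun i M => forall j, forall s, 0 <= s <= T -> forall z, xnorm (xsub z (gam s)) < d ->
   U z /\ Rabs (A z i j - A (gam s) i j) < e' /\ Rabs (A z i j) <= M) i M.
  move=> i. case: (fin_bound _ (Hd i)) => [j M M' hM HM|M HM].
    move=> s hs z hz; have [a [b c]] := HM s hs z ltac:(have := Rmin_l d du; lra); split => //; split => //; lra.
  by exists M.
case: (fin_bound _ allM) => [i M M' hM HM j s hs z hz|M HM].
  have [a [b c]] := HM j s hs z hz; split => //; split => //; lra.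
exists (INR p * (INR q * M)) => s hs z hz.
have u : U z by have [a _] := Hu s hs z ltac:(have := Rmin_r d du; lra).
split => //; split.
  rewrite /msum. apply: Rle_trans (rsum_le_const (c := INR q * e') _) _.
    move=> i; apply: rsum_le_const => j; have [_ [b _]] := HM i j s hs z ltac:(have := Rmin_l d du; lra); lra.
  have : INR p * (INR q * e') <= K * e'.
    rewrite /K; have := pos_INR p; have := pos_INR q; nra.
  rewrite /e' /Rdiv. have -> : K * (eps * / K) = eps by field; lra. done.
rewrite /msum. apply: rsum_le_const => i; apply: rsum_le_const => j. have [_ [_ c]] := HM i j s hs z ltac:(have := Rmin_l d du; lra); lra.
Qed.

Lemma cont_of_eps f s : (forall eps, 0 < eps -> exists delta, 0 < delta /\ forall x, Rabs (x - s) < delta -> Rabs (f x - f s) < eps) -> continuity_pt f s.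
Proof.
move=> H eps he. have [d [dp Hd]] := H eps he. exists d; split => // x [_ hx]. exact: Hd.
Qed.

Lemma weight (b : R -> R) (T : R) : 0 <= T -> (forall s, continuity_pt b s) ->
  exists W : R -> R, (forall t, 0 < W t) /\ W 0 = 1 /\
    forall t, 0 <= t <= T -> derivable_pt_lim W t (- b t * W t).
Proof.
move=> hT hb.
have h : -1 <= T + 1 by lra.
have C0 : forall x, -1 <= x <= T + 1 -> continuity_pt b x by move=> x _; exact: hb.
set P := primitive h (FTC_P1 h C0).
exists (fun t => exp (P 0 - P t)); split; first by move=> t; exact: exp_pos.
split; first by rewrite Rminus_diag exp_0.
move=> t ht.
have dP : derivable_pt_lim P t (b t) by apply: RiemannInt_P28; lra.
have d2 : derivable_pt_lim (fun s => P 0 - P s) t (0 - b t).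
  apply: derivable_pt_lim_minus; [exact: derivable_pt_lim_const| exact: dP].
have := derivable_pt_lim_comp (fun s => P 0 - P s) exp t (0 - b t) (exp (P 0 - P t)) d2 (derivable_pt_lim_exp _).
rewrite /comp. move=> H. have -> : - b t * exp (P 0 - P t) = exp (P 0 - P t) * (0 - b t) by ring. exact: H.
Qed.

Lemma exp_mono a b : a <= b -> exp a <= exp b.
Proof. case=> h; [left; exact: exp_increasing | rewrite h; lra]. Qed.

Lemma dlim_eq f t l l' : derivable_pt_lim f t l -> l = l' -> derivable_pt_lim f t l'.
Proof. by move=> h <-. Qed.

Lemma half_pos e : 0 < e -> 0 < e / 2.
Proof. move=> h; lra. Qed.

Section P.
Variables (n m : nat) (f : X n m -> vec n) (g : X n m -> vec m) (U Gamma : X n m -> Prop).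
Hypothesis HUopen : is_open U.
Variables (Daf : X n m -> mat n n) (Dzf : X n m -> mat n m) (Dag : X n m -> mat m n) (Dzg : X n m -> mat m m).
Hypothesis Hfdiff : forall x, U x ->
     frechet_at f (fun v => vadd (mapp (Daf x) v.1) (mapp (Dzf x) v.2)) x.
Hypothesis Hgdiff : forall x, U x ->
     frechet_at g (fun v => vadd (mapp (Dag x) v.1) (mapp (Dzg x) v.2)) x.
Hypothesis HDafc : forall i j, cont_on U (fun x => Daf x i j).
Hypothesis HDzfc : forall i j, cont_on U (fun x => Dzf x i j).
Hypothesis HDagc : forall i j, cont_on U (fun x => Dag x i j).
Hypothesis HDzgc : forall i j, cont_on U (fun x => Dzg x i j).
Variable Phi : R -> X n m -> X n m.
Hypothesis HPhi0 : forall x, Gamma x -> Phi 0 x = x.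
Hypothesis HPhi : forall x, Gamma x ->
     solves_nonneg (fun t => Phi t x) (fun _ p => (f p, g p)).
Hypothesis HGU : forall x, Gamma x -> U x.
Hypothesis HGinv : forall x t, Gamma x -> 0 <= t -> Gamma (Phi t x).

Definition DFp p v := DFapp Daf Dzf Dag Dzg p v.
Definition Ff p : X n m := (f p, g p).
Definition JB p := msum (Daf p) + msum (Dzf p) + msum (Dag p) + msum (Dzg p).
Definition JD p c := msum (fun i j => Daf p i j - Daf c i j) + msum (fun i j => Dzf p i j - Dzf c i j)
  + msum (fun i j => Dag p i j - Dag c i j) + msum (fun i j => Dzg p i j - Dzg c i j).

Lemma JB_nonneg p : 0 <= JB p.
Proof. rewrite /JB; have := msum_nonneg (Daf p); have := msum_nonneg (Dzf p); have := msum_nonneg (Dag p); have := msum_nonneg (Dzg p); lra. Qed.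

Lemma DF_bound p v : xnorm (DFp p v) <= JB p * xnorm v.
Proof.
apply: Rle_trans (xnorm_le _) _. rewrite /DFp /DFapp /=.
have := vnorm_add (mapp (Daf p) v.1) (mapp (Dzf p) v.2).
have := vnorm_add (mapp (Dag p) v.1) (mapp (Dzg p) v.2).
have := mapp_bound (Daf p) v.1. have := mapp_bound (Dzf p) v.2.
have := mapp_bound (Dag p) v.1. have := mapp_bound (Dzg p) v.2.
have := xnorm_fst v; have := xnorm_snd v.
have := msum_nonneg (Daf p); have := msum_nonneg (Dzf p); have := msum_nonneg (Dag p); have := msum_nonneg (Dzg p).
rewrite /JB. nra.
Qed.

Lemma DF_diff p c v : xnorm (xsub (DFp p v) (DFp c v)) <= JD p c * xnorm v.
Proof.
apply: Rle_trans (xnorm_le _) _. rewrite /DFp /DFapp /xsub /=.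
have e1 : vsub (vadd (mapp (Daf p) v.1) (mapp (Dzf p) v.2)) (vadd (mapp (Daf c) v.1) (mapp (Dzf c) v.2))
  = vadd (mapp (fun i j => Daf p i j - Daf c i j) v.1) (mapp (fun i j => Dzf p i j - Dzf c i j) v.2).
  rewrite -!mapp_msub; apply: functional_extensionality => i; rewrite /vsub /vadd; ring.
have e2 : vsub (vadd (mapp (Dag p) v.1) (mapp (Dzg p) v.2)) (vadd (mapp (Dag c) v.1) (mapp (Dzg c) v.2))
  = vadd (mapp (fun i j => Dag p i j - Dag c i j) v.1) (mapp (fun i j => Dzg p i j - Dzg c i j) v.2).
  rewrite -!mapp_msub; apply: functional_extensionality => i; rewrite /vsub /vadd; ring.
rewrite e1 e2.
set A1 := (fun i j => Daf p i j - Daf c i j). set A2 := (fun i j => Dzf p i j - Dzf c i j).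
set A3 := (fun i j => Dag p i j - Dag c i j). set A4 := (fun i j => Dzg p i j - Dzg c i j).
have := vnorm_add (mapp A1 v.1) (mapp A2 v.2).
have := vnorm_add (mapp A3 v.1) (mapp A4 v.2).
have := mapp_bound A1 v.1. have := mapp_bound A2 v.2.
have := mapp_bound A3 v.1. have := mapp_bound A4 v.2.
have := xnorm_fst v; have := xnorm_snd v.
have := msum_nonneg A1; have := msum_nonneg A2; have := msum_nonneg A3; have := msum_nonneg A4.
rewrite /JD -/A1 -/A2 -/A3 -/A4. nra.
Qed.

Lemma DF_sub p u w : DFp p (xsub u w) = xsub (DFp p u) (DFp p w).
Proof.
rewrite /DFp /DFapp /xsub /= !mapp_sub; congr pair; apply: functional_extensionality => i; rewrite /vsub /vadd; ring.
Qed.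

Lemma DF_scal p h v : DFp p (xscal h v) = xscal h (DFp p v).
Proof.
rewrite /DFp /DFapp /xscal /= !mapp_scal; congr pair; apply: functional_extensionality => i; rewrite /vscal /vadd; ring.
Qed.

Lemma gam_U x s : Gamma x -> 0 <= s -> U (Phi s x).
Proof. move=> hx hs; apply: HGU; exact: HGinv. Qed.

Lemma gam_cont x T : Gamma x -> forall s, 0 <= s <= T -> forall eps, 0 < eps -> exists delta, 0 < delta /\
      forall s', 0 <= s' <= T -> Rabs (s' - s) < delta -> xnorm (xsub (Phi s' x) (Phi s x)) < eps.
Proof.
move=> hx s hs eps he. have [d [dp Hd]] := sol_cont (HPhi hx) (proj1 hs) he.
exists d; split => // s' hs' h; apply: Hd => //; lra.
Qed.

Lemma jac_tube x T : Gamma x -> 0 <= T -> forall eps, 0 < eps -> exists delta, 0 < delta /\ exists M, forall s, 0 <= s <= T ->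
    forall z, xnorm (xsub z (Phi s x)) < delta -> U z /\ JD z (Phi s x) <= eps /\ JB z <= M.
Proof.
move=> hx hT eps he.
have hgU : forall s, 0 <= s <= T -> U (Phi s x) by move=> s hs; apply: gam_U => //; lra.
have hgc := gam_cont (T := T) hx.
have e4 : 0 < eps / 4 by lra.
have [d1 [d1p [M1 H1]]] := entries_tube HUopen HDafc hT hgU hgc e4.
have [d2 [d2p [M2 H2]]] := entries_tube HUopen HDzfc hT hgU hgc e4.
have [d3 [d3p [M3 H3]]] := entries_tube HUopen HDagc hT hgU hgc e4.
have [d4 [d4p [M4 H4]]] := entries_tube HUopen HDzgc hT hgU hgc e4.
exists (Rmin (Rmin d1 d2) (Rmin d3 d4)); split; first by repeat apply: Rmin_pos.
exists (M1 + M2 + M3 + M4) => s hs z hz.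
have m1 := Rmin_l (Rmin d1 d2) (Rmin d3 d4). have m2 := Rmin_r (Rmin d1 d2) (Rmin d3 d4).
have := Rmin_l d1 d2. have := Rmin_r d1 d2. have := Rmin_l d3 d4. have := Rmin_r d3 d4. move=> a b c d.
have [u1 [v1 w1]] := H1 s hs z ltac:(lra).
have [u2 [v2 w2]] := H2 s hs z ltac:(lra).
have [u3 [v3 w3]] := H3 s hs z ltac:(lra).
have [u4 [v4 w4]] := H4 s hs z ltac:(lra).
split => //; rewrite /JD /JB; split; lra.
Qed.

Lemma lip_traj x T : Gamma x -> 0 <= T -> forall delta M, 0 < delta ->
  (forall s, 0 <= s <= T -> forall z, xnorm (xsub z (Phi s x)) < delta -> U z /\ JB z <= M) ->
  forall s, 0 <= s <= T -> forall z, xnorm (xsub z (Phi s x)) < delta ->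
    xnorm (xsub (Ff z) (Ff (Phi s x))) <= M * xnorm (xsub z (Phi s x)).
Proof.
move=> hx hT delta M dp HM s hs z hz.
apply: (seg_lip (Df := fun q v => vadd (mapp (Daf q) v.1) (mapp (Dzf q) v.2))
                (Dg := fun q v => vadd (mapp (Dag q) v.1) (mapp (Dzg q) v.2))).
move=> th hth.
set q := xadd (Phi s x) (xscal th (xsub z (Phi s x))).
have hq : xnorm (xsub q (Phi s x)) < delta.
  have -> : xsub q (Phi s x) = xscal th (xsub z (Phi s x)).
    rewrite /q /xsub /xadd /xscal /=; congr pair; apply: functional_extensionality => i; rewrite /vsub /vadd /vscal; ring.
  rewrite xnorm_scal Rabs_right; last lra. have := xnorm_nonneg (xsub z (Phi s x)). nra.
have [Uq Mq] := HM s hs q hq.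
split; first exact: Hfdiff.
split; first exact: Hgdiff.
split. move=> h v; rewrite /xscal /= !mapp_scal; apply: functional_extensionality => i; rewrite /vscal /vadd; ring.
split. move=> h v; rewrite /xscal /= !mapp_scal; apply: functional_extensionality => i; rewrite /vscal /vadd; ring.
have := DF_bound q (xsub z (Phi s x)). rewrite /DFp /DFapp.
have := xnorm_nonneg (xsub z (Phi s x)). nra.
Qed.

Lemma xsub_self (a : X n m) : xnorm (xsub a a) = 0.
Proof.
have -> : xsub a a = @xzero n m.
  rewrite /xsub /xzero; congr pair; apply: functional_extensionality => i; rewrite /vsub /vzero; ring.
exact: xnorm_zero.
Qed.

Lemma xsub_zero (v : X n m) : xsub v (@xzero n m) = v.
Proof. rewrite /xsub /xzero [RHS]surjective_pairing /=; congr pair; apply: functional_extensionality => i; rewrite /vsub /vzero /=; ring. Qed.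

Lemma xsub4 (a b c d : X n m) : xnorm (xsub (xsub a b) (xsub c d)) <= xnorm (xsub a c) + xnorm (xsub b d).
Proof.
have -> : xsub (xsub a b) (xsub c d) = xsub (xsub a c) (xsub b d).
  rewrite /xsub /=; congr pair; apply: functional_extensionality => i; rewrite /vsub; ring.
exact: xnorm_sub.
Qed.

Lemma rc_xsq (u : R -> X n m) : (forall eps, 0 < eps -> exists delta, 0 < delta /\ forall t, 0 <= t < delta -> xnorm (xsub (u t) (u 0)) < eps) ->
  rc (fun t => xsq (u t)).
Proof.
move=> H eps he. set a := xnorm (u 0). have ha : 0 <= a by exact: xnorm_nonneg.
set e := Rmin 1 (eps / (2 * (2 * a + 1) + 1)).
have ep : 0 < e by apply: Rmin_pos; [lra| apply: Rdiv_lt_0_compat; lra].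
have [d [dp Hd]] := H e ep. exists d; split => // t ht.
have h1 := Hd t ht. have := xsq_diff (u t) (u 0).
have hu : xnorm (u t) <= a + e.
  have := xnorm_tri (u t) (u 0) (@xzero n m).
  rewrite !xsub_zero. rewrite /a; lra.
have e1 : e <= 1 by apply: Rmin_l.
have e2 : e <= eps / (2 * (2 * a + 1) + 1) by apply: Rmin_r.
have e3 : eps / (2 * (2 * a + 1) + 1) * (2 * (2 * a + 1) + 1) = eps by field; lra.
have := xnorm_nonneg (xsub (u t) (u 0)). have := xnorm_nonneg (u t).
move=> p1 p2 h2. apply: Rle_lt_trans h2 _.
have : 2 * xnorm (xsub (u t) (u 0)) * (xnorm (u t) + a) <= 2 * e * (2 * a + 1).
  have : xnorm (u t) + a <= 2 * a + 1 by lra. nra.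
have : 2 * e * (2 * a + 1) < eps.
  have : e * (2 * (2 * a + 1) + 1) <= eps by nra. nra.
rewrite /a; lra.
Qed.

Lemma deriv_xsq (u : R -> X n m) (du : X n m) t :
  (forall i, derivable_pt_lim (fun s => (u s).1 i) t (du.1 i)) ->
  (forall j, derivable_pt_lim (fun s => (u s).2 j) t (du.2 j)) ->
  derivable_pt_lim (fun s => xsq (u s)) t (2 * xdot (u t) du).
Proof.
move=> h1 h2. rewrite /xsq. apply: dlim_eq.
  apply: derivable_pt_lim_plus; apply: deriv_vdot; eauto.
rewrite /xdot (vdot_comm du.1) (vdot_comm du.2); ring.
Qed.

Lemma flow_cont x T : Gamma x -> 0 <= T -> forall eps, 0 < eps -> exists delta, 0 < delta /\
  forall y, Gamma y -> xnorm (xsub y x) < delta -> forall t, 0 <= t <= T -> xnorm (xsub (Phi t y) (Phi t x)) < eps.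
Proof.
move=> hx hT eps he.
have [rho [rhop [M HM]]] := jac_tube hx hT Rlt_0_1.
have M0 : 0 <= M.
  have [_ [_ h]] := HM 0 ltac:(lra) (Phi 0 x) ltac:(rewrite xsub_self; lra).
  have := JB_nonneg (Phi 0 x); lra.
have HM' : forall s, 0 <= s <= T -> forall z, xnorm (xsub z (Phi s x)) < rho -> U z /\ JB z <= M.
  move=> s hs z hz; have [a [_ c]] := HM s hs z hz; split => //.
set r := Rmin rho eps / 2.
have rp : 0 < r by rewrite /r; have := Rmin_pos rho eps rhop he; lra.
exists (r * exp (- (M * T))); split; first by apply: Rmult_lt_0_compat => //; exact: exp_pos.
move=> y hy hyx.
set Del := fun t => xsub (Phi t y) (Phi t x).
set Q := fun tau => forall t, 0 <= t <= tau -> t <= T -> xnorm (Del t) < r.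
suff : Q T.
  move=> HQ t ht. have := HQ t ht (proj2 ht). have := Rmin_r rho eps. rewrite /r /Del. lra.
apply: real_ind => //.
- move=> s t st HQ t' ht' hT'; apply: HQ => //; lra.
- move=> s hs t ht; lra.
move=> tau htau below.
set D := fun t => xsq (Del t).
set D' := fun t => 2 * xdot (Del t) (xsub (Ff (Phi t y)) (Ff (Phi t x))).
have dD : forall t, 0 < t <= tau -> derivable_pt_lim D t (D' t).
  move=> t ht. have [a1 b1] := proj1 (HPhi hy) t ltac:(lra). have [a2 b2] := proj1 (HPhi hx) t ltac:(lra).
  apply: deriv_xsq => i.
    exact: (derivable_pt_lim_minus _ _ _ _ _ (a1 i) (a2 i)).
  exact: (derivable_pt_lim_minus _ _ _ _ _ (b1 i) (b2 i)).
have hle : forall t, 0 < t < tau -> D' t <= 2 * M * D t.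
  move=> t ht. have ht2 : xnorm (Del t) < r by apply: (below t ltac:(lra)); lra.
  have hr : r <= rho / 2 by have := Rmin_l rho eps; rewrite /r; lra.
  have hl := lip_traj hx hT rhop HM' (s := t) ltac:(lra) (z := Phi t y) ltac:(rewrite -/(Del t); lra).
  rewrite /D' /D -xnorm_sq. have := xdot_le (Del t) (xsub (Ff (Phi t y)) (Ff (Phi t x))).
  have := xnorm_nonneg (Del t). rewrite -/(Del t) in hl. nra.
have hrc : rc D.
  apply: rc_xsq => e' he'.
  have [d1 [d1p H1]] := sol_cont (HPhi hy) (Rle_refl 0) (half_pos he').
  have [d2 [d2p H2]] := sol_cont (HPhi hx) (Rle_refl 0) (half_pos he').
  exists (Rmin d1 d2); split; first by apply: Rmin_pos.
  move=> t ht. have := xsub4 (Phi t y) (Phi t x) (Phi 0 y) (Phi 0 x).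
  have := H1 t ltac:(lra) ltac:(rewrite Rminus_0_r Rabs_right; have := Rmin_l d1 d2; lra).
  have := H2 t ltac:(lra) ltac:(rewrite Rminus_0_r Rabs_right; have := Rmin_r d1 d2; lra).
  rewrite /Del. lra.
have G := gronwall (proj1 htau) dD hle hrc.
have D0 : D 0 < r * r * exp (- (2 * M * T)).
  rewrite /D /Del HPhi0 // HPhi0 // -xnorm_sq.
  have e : exp (- (2 * M * T)) = exp (- (M * T)) * exp (- (M * T)) by rewrite -exp_plus; congr exp; ring.
  rewrite e. have := xnorm_nonneg (xsub y x). have := exp_pos (- (M * T)). nra.
have Dtau : D tau < r * r.
  have e1 : exp (2 * M * tau) <= exp (2 * M * T) by apply: exp_mono; nra.
  have e2 : exp (- (2 * M * T)) * exp (2 * M * T) = 1.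
    rewrite -exp_plus. have -> : - (2 * M * T) + 2 * M * T = 0 by ring. exact: exp_0.
  have e3 : 0 <= D 0 by exact: xsq_nonneg.
  have := exp_pos (2 * M * tau). have := exp_pos (2 * M * T). have := exp_pos (- (2 * M * T)).
  move=> p1 p2 p3.
  have : D 0 * exp (2 * M * tau) <= D 0 * exp (2 * M * T) by apply: Rmult_le_compat_l.
  have : D 0 * exp (2 * M * T) < r * r * exp (- (2 * M * T)) * exp (2 * M * T) by apply: Rmult_lt_compat_r.
  have e4 : r * r * exp (- (2 * M * T)) * exp (2 * M * T) = r * r by rewrite Rmult_assoc e2; ring.
  rewrite e4. lra.
have Ntau : xnorm (Del tau) < r.
  rewrite /D -xnorm_sq in Dtau. have := xnorm_nonneg (Del tau). nra.
set s0 := r - xnorm (Del tau).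
have s0p : 0 < s0 by rewrite /s0; lra.
have [e1 [e1p H1]] := sol_cont (HPhi hy) (proj1 htau) (half_pos s0p).
have [e2 [e2p H2]] := sol_cont (HPhi hx) (proj1 htau) (half_pos s0p).
exists (Rmin e1 e2 / 2); split; first by have := Rmin_pos e1 e2 e1p e2p; lra.
move=> t ht htT.
case: (Rlt_le_dec t tau) => htt.
  apply: (below t htt t) => //; lra.
have a1 : Rabs (t - tau) < Rmin e1 e2 by rewrite Rabs_right; have := Rmin_pos e1 e2 e1p e2p; lra.
have := xsub4 (Phi t y) (Phi t x) (Phi tau y) (Phi tau x).
have := H1 t ltac:(lra) ltac:(have := Rmin_l e1 e2; lra).
have := H2 t ltac:(lra) ltac:(have := Rmin_r e1 e2; lra).
have := xnorm_tri (Del t) (Del tau) (@xzero n m).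
rewrite !xsub_zero /Del /s0 -/(Del tau). rewrite /Del. lra.
Qed.

Variable Qv : R -> X n m -> X n m -> X n m.
Hypothesis HQ0 : forall x v, Gamma x -> Qv 0 x v = v.
Hypothesis HQ : forall x v, Gamma x ->
     solves_nonneg (fun t => Qv t x v) (fun t y => DFapp Daf Dzf Dag Dzg (Phi t x) y).

Lemma rc_sol (u : R -> X n m) V : solves_nonneg u V -> rc (fun t => xsq (u t)).
Proof.
move=> hs. apply: rc_xsq => e he. have [d [dp Hd]] := sol_cont hs (Rle_refl 0) he.
exists d; split => // t ht; apply: Hd; first lra. rewrite Rminus_0_r Rabs_right; lra.
Qed.

Lemma rc_sol2 (u w : R -> X n m) V1 V2 : solves_nonneg u V1 -> solves_nonneg w V2 -> rc (fun t => xsq (xsub (u t) (w t))).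
Proof.
move=> hu hw. apply: rc_xsq => e he.
have [d1 [d1p H1]] := sol_cont hu (Rle_refl 0) (half_pos he).
have [d2 [d2p H2]] := sol_cont hw (Rle_refl 0) (half_pos he).
exists (Rmin d1 d2); split; first by apply: Rmin_pos.
move=> t ht. have := xsub4 (u t) (w t) (u 0) (w 0).
have := H1 t ltac:(lra) ltac:(rewrite Rminus_0_r Rabs_right; have := Rmin_l d1 d2; lra).
have := H2 t ltac:(lra) ltac:(rewrite Rminus_0_r Rabs_right; have := Rmin_r d1 d2; lra).
lra.
Qed.

Lemma Q_growth x T M : Gamma x -> 0 <= T -> (forall s, 0 <= s <= T -> JB (Phi s x) <= M) ->
  forall v t, 0 <= t <= T -> xsq (Qv t x v) <= xsq v * exp (2 * M * t).
Proof.
move=> hx hT HM v t ht.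
set D := fun s => xsq (Qv s x v).
set D' := fun s => 2 * xdot (Qv s x v) (DFp (Phi s x) (Qv s x v)).
have dD : forall s, 0 < s <= t -> derivable_pt_lim D s (D' s).
  move=> s hs. have [a b] := proj1 (HQ v hx) s ltac:(lra). apply: deriv_xsq; [exact: a| exact: b].
have hle : forall s, 0 < s < t -> D' s <= 2 * M * D s.
  move=> s hs. rewrite /D' /D -xnorm_sq.
  have := xdot_le (Qv s x v) (DFp (Phi s x) (Qv s x v)).
  have := DF_bound (Phi s x) (Qv s x v). have := HM s ltac:(lra).
  have := JB_nonneg (Phi s x). have := xnorm_nonneg (Qv s x v).
  have := xnorm_nonneg (DFp (Phi s x) (Qv s x v)). nra.
have := gronwall (proj1 ht) dD hle (rc_sol (HQ v hx)).
rewrite /D HQ0 //.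
Qed.

Lemma Q_cont x T B : Gamma x -> 0 <= T -> 0 <= B -> forall eps, 0 < eps -> exists delta, 0 < delta /\
  forall y, Gamma y -> xnorm (xsub y x) < delta -> forall v, xnorm v <= B ->
    xnorm (xsub (Qv T y v) (Qv T x v)) < eps.
Proof.
move=> hx hT hB eps he.
have [r0 [r0p [M0 HM0]]] := jac_tube hx hT Rlt_0_1.
have M0p : 0 <= M0.
  have [_ [_ h]] := HM0 0 ltac:(lra) (Phi 0 x) ltac:(rewrite xsub_self; lra).
  have := JB_nonneg (Phi 0 x); lra.
set P := B * exp (M0 * T).
have Pp : 0 <= P by rewrite /P; have := exp_pos (M0 * T); nra.
set K := exp ((2 * M0 + P + 1) * T).
have Kp : 0 < K by exact: exp_pos.
set eta := Rmin 1 (eps * eps / (2 * (P * K + 1))).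
have etap : 0 < eta by apply: Rmin_pos; [lra| apply: Rdiv_lt_0_compat; nra].
have eta1 : eta <= 1 by apply: Rmin_l.
have eta2 : eta * P * K < eps * eps.
  have : eta <= eps * eps / (2 * (P * K + 1)) by apply: Rmin_r.
  move=> h. have : eta * (P * K) <= eps * eps / (2 * (P * K + 1)) * (P * K).
    apply: Rmult_le_compat_r => //; nra.
  have : eps * eps / (2 * (P * K + 1)) * (P * K) < eps * eps.
    have e1 : eps * eps / (2 * (P * K + 1)) * (P * K) = eps * eps * (P * K / (2 * (P * K + 1))) by field; nra.
    rewrite e1. have : P * K / (2 * (P * K + 1)) < 1.
      apply: (Rmult_lt_reg_r (2 * (P * K + 1))); first nra. rewrite /Rdiv Rmult_assoc Rinv_l; nra.
    have := Rmult_lt_0_compat eps eps he he. nra.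
  lra.
have [r1 [r1p [M1 HM1]]] := jac_tube hx hT etap.
have [d [dp Hd]] := flow_cont hx hT (Rmin_pos r0 r1 r0p r1p).
exists d; split => // y hy hyx v hv.
have Hy : forall s, 0 <= s <= T -> JB (Phi s y) <= M0 /\ JD (Phi s y) (Phi s x) <= eta.
  move=> s hs. have h := Hd y hy hyx s hs.
  have [_ [_ a]] := HM0 s hs (Phi s y) ltac:(have := Rmin_l r0 r1; lra).
  have [_ [b _]] := HM1 s hs (Phi s y) ltac:(have := Rmin_r r0 r1; lra). by split.
have Qx : forall s, 0 <= s <= T -> xnorm (Qv s x v) <= P.
  move=> s hs. have h := Q_growth hx hT (fun s hs => proj2 (proj2 (HM0 s hs (Phi s x) ltac:(rewrite xsub_self; lra)))) v hs.
  apply: xnorm_le_of_sq => //.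
  have e1 : exp (2 * M0 * s) <= exp (M0 * T) * exp (M0 * T).
    rewrite -exp_plus; apply: exp_mono; nra.
  have : xsq v <= B * B by rewrite -xnorm_sq; have := xnorm_nonneg v; nra.
  have := exp_pos (2 * M0 * s). have := exp_pos (M0 * T). rewrite /P. move=> a b' c.
  apply: Rle_trans h _. have := xsq_nonneg v. nra.
set c := 2 * M0 + eta * P + 1.
have cp : 1 <= c by rewrite /c; nra.
set b := eta * P.
set E := fun s => xsq (xsub (Qv s y v) (Qv s x v)) + b / c.
set E' := fun s => 2 * xdot (xsub (Qv s y v) (Qv s x v)) (xsub (DFp (Phi s y) (Qv s y v)) (DFp (Phi s x) (Qv s x v))).
have dE : forall s, 0 < s <= T -> derivable_pt_lim E s (E' s).
  move=> s hs. have [a1 b1] := proj1 (HQ v hy) s ltac:(lra). have [a2 b2] := proj1 (HQ v hx) s ltac:(lra).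
  apply: (dlim_eq (l := 2 * xdot (xsub (Qv s y v) (Qv s x v)) (xsub (DFp (Phi s y) (Qv s y v)) (DFp (Phi s x) (Qv s x v))) + 0)).
    apply: derivable_pt_lim_plus; last exact: derivable_pt_lim_const.
    apply: deriv_xsq => i.
      exact: (derivable_pt_lim_minus _ _ _ _ _ (a1 i) (a2 i)).
    exact: (derivable_pt_lim_minus _ _ _ _ _ (b1 i) (b2 i)).
  rewrite /E'; ring.
have hle : forall s, 0 < s < T -> E' s <= c * E s.
  move=> s hs. have [hJB hJD] := Hy s ltac:(lra).
  set e := xsub (Qv s y v) (Qv s x v).
  have split : xsub (DFp (Phi s y) (Qv s y v)) (DFp (Phi s x) (Qv s x v))
     = xadd (DFp (Phi s y) e) (xsub (DFp (Phi s y) (Qv s x v)) (DFp (Phi s x) (Qv s x v))).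
    rewrite /e DF_sub /xsub /xadd /=; congr pair; apply: functional_extensionality => i; rewrite /vsub /vadd; ring.
  rewrite /E' -/e split.
  have n1 := xnorm_add (DFp (Phi s y) e) (xsub (DFp (Phi s y) (Qv s x v)) (DFp (Phi s x) (Qv s x v))).
  have n2 := DF_bound (Phi s y) e.
  have n3 := DF_diff (Phi s y) (Phi s x) (Qv s x v).
  have n4 := Qx s ltac:(lra).
  have n5 := xdot_le e (xadd (DFp (Phi s y) e) (xsub (DFp (Phi s y) (Qv s x v)) (DFp (Phi s x) (Qv s x v)))).
  have := xnorm_nonneg e. have := JB_nonneg (Phi s y). have := xnorm_nonneg (Qv s x v).
  have : 0 <= JD (Phi s y) (Phi s x).
    rewrite /JD. have := msum_nonneg (fun i j => Daf (Phi s y) i j - Daf (Phi s x) i j).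
    have := msum_nonneg (fun i j => Dzf (Phi s y) i j - Dzf (Phi s x) i j).
    have := msum_nonneg (fun i j => Dag (Phi s y) i j - Dag (Phi s x) i j).
    have := msum_nonneg (fun i j => Dzg (Phi s y) i j - Dzg (Phi s x) i j). lra.
  rewrite /E -/e -xnorm_sq.
  have ebc : c * (b / c) = b by field; lra.
  move=> q1 q2 q3 q4.
  have : xnorm (xadd (DFp (Phi s y) e) (xsub (DFp (Phi s y) (Qv s x v)) (DFp (Phi s x) (Qv s x v))))
         <= M0 * xnorm e + eta * P.
    have : JB (Phi s y) * xnorm e <= M0 * xnorm e by apply: Rmult_le_compat_r.
    have : JD (Phi s y) (Phi s x) * xnorm (Qv s x v) <= eta * P by apply: Rmult_le_compat; lra.
    lra.
  move=> hh.
  have : 2 * xnorm e * (M0 * xnorm e + eta * P) <= c * (xnorm e * xnorm e + b / c).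
    have -> : c * (xnorm e * xnorm e + b / c) = c * (xnorm e * xnorm e) + b by rewrite Rmult_plus_distr_l ebc.
    rewrite /c /b.
    have : 0 <= eta * P * ((xnorm e - 1) * (xnorm e - 1)).
      apply: Rmult_le_pos; [apply: Rmult_le_pos; lra | exact: (Rle_0_sqr (xnorm e - 1))].
    have : 0 <= M0 * (xnorm e * xnorm e) by apply: Rmult_le_pos; nra.
    nra.
  have : 2 * xdot e (xadd (DFp (Phi s y) e) (xsub (DFp (Phi s y) (Qv s x v)) (DFp (Phi s x) (Qv s x v))))
     <= 2 * xnorm e * (M0 * xnorm e + eta * P).
    have := Rmult_le_compat_l (xnorm e) _ _ q4 hh. lra.
  lra.
have hrc : rc E.
  have rcc : rc (fun _ => b / c).
    move=> e0 he0; exists 1; split; [lra| move=> t _ /=; rewrite Rminus_diag Rabs_R0; lra].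
  exact: (rc_plus (rc_sol2 (HQ v hy) (HQ v hx)) rcc).
have G := gronwall hT dE hle hrc.
rewrite /E HQ0 // HQ0 // in G.
have e0 : xsq (xsub v v) = 0 by rewrite -xnorm_sq xsub_self; ring.
rewrite e0 Rplus_0_l in G.
have bp : 0 <= b by rewrite /b; nra.
have hbc : b / c <= b.
  apply: (Rmult_le_reg_r c); first lra. rewrite /Rdiv Rmult_assoc Rinv_l; nra.
have ecT : exp (c * T) <= K.
  rewrite /K; apply: exp_mono; rewrite /c. have : eta * P <= P by nra. move=> hh. apply: Rmult_le_compat_r => //; lra.
have : xsq (xsub (Qv T y v) (Qv T x v)) < eps * eps.
  have := exp_pos (c * T). have : 0 <= b / c by apply: Rmult_le_pos; [lra| left; apply: Rinv_0_lt_compat; lra]. move=> a a'.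
  have : b / c * exp (c * T) <= b * K by apply: Rmult_le_compat => //; lra.
  move=> hh. have := eta2. rewrite -/b. lra.
rewrite -xnorm_sq. have := xnorm_nonneg (xsub (Qv T y v) (Qv T x v)). nra.
Qed.

Variables (alpha ell : X n m -> R) (c1 : R).
Hypothesis Halphac : cont_on U alpha.
Hypothesis Hellc : cont_on U ell.
Hypothesis Halpha : forall x, U x -> 0 < alpha x.
Hypothesis Hell : forall x, U x -> 0 <= ell x.
Hypothesis Hc1 : 0 < c1.
Hypothesis Hdaf : forall x, U x -> forall a' : vec n,
     vdot a' (mapp (Daf x) a') >= alpha x * vnorm a' ^ 2.
Hypothesis Hdzg : forall x, U x -> forall z' : vec m,
     vdot z' (mapp (Dzg x) z') <= ell x * vnorm z' ^ 2.
Hypothesis Hgap : forall x, U x ->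
     alpha x >= ell x + opnorm (Dzf x) + opnorm (Dag x) + c1.

Lemma var_ineq p u : U p ->
  2 * (vdot u.1 (DFp p u).1 - vdot u.2 (DFp p u).2) >= (alpha p + ell p) * Lcone u (@xzero n m) + c1 * xsq u.
Proof.
move=> hp. rewrite Lcone_zero /DFp /DFapp /= !vdot_addr /xsq.
have h1 := Hdaf hp u.1. have h2 := Hdzg hp u.2.
rewrite !vnorm_pow2 in h1 h2.
have h3 : Rabs (vdot u.1 (mapp (Dzf p) u.2)) <= vnorm u.1 * (opnorm (Dzf p) * vnorm u.2).
  apply: Rle_trans (CS _ _) _. apply: Rmult_le_compat_l; [exact: vnorm_nonneg| exact: opnorm_bound].
have h4 : Rabs (vdot u.2 (mapp (Dag p) u.1)) <= vnorm u.2 * (opnorm (Dag p) * vnorm u.1).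
  apply: Rle_trans (CS _ _) _. apply: Rmult_le_compat_l; [exact: vnorm_nonneg| exact: opnorm_bound].
have h5 := Hgap hp. have o1 := opnorm_nonneg (Dzf p). have o2 := opnorm_nonneg (Dag p).
have a1 := vnorm_nonneg u.1. have a2 := vnorm_nonneg u.2.
have s1 := vnorm_sq u.1. have s2 := vnorm_sq u.2.
have := Rle_abs (- vdot u.1 (mapp (Dzf p) u.2)). rewrite Rabs_Ropp.
have := Rle_abs (vdot u.2 (mapp (Dag p) u.1)).
move=> k1 k2.
have key : (alpha p - ell p - c1) * (vnorm u.1 * vnorm u.1 + vnorm u.2 * vnorm u.2) >= 2 * (opnorm (Dzf p) + opnorm (Dag p)) * (vnorm u.1 * vnorm u.2).
  have : vnorm u.1 * vnorm u.1 + vnorm u.2 * vnorm u.2 >= 2 * (vnorm u.1 * vnorm u.2) by have := Rle_0_sqr (vnorm u.1 - vnorm u.2); rewrite /Rsqr; nra.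
  have : 0 <= vnorm u.1 * vnorm u.2 by apply: Rmult_le_pos.
  have : (alpha p - ell p - c1) >= opnorm (Dzf p) + opnorm (Dag p) by lra.
  move=> hk hAZ hS.
  have r1 : (alpha p - ell p - c1) * (vnorm u.1 * vnorm u.1 + vnorm u.2 * vnorm u.2) >= (opnorm (Dzf p) + opnorm (Dag p)) * (vnorm u.1 * vnorm u.1 + vnorm u.2 * vnorm u.2).
    apply: Rmult_ge_compat_r; [have := Rle_0_sqr (vnorm u.1); have := Rle_0_sqr (vnorm u.2); rewrite /Rsqr; lra| lra].
  have r2 : (opnorm (Dzf p) + opnorm (Dag p)) * (vnorm u.1 * vnorm u.1 + vnorm u.2 * vnorm u.2) >= (opnorm (Dzf p) + opnorm (Dag p)) * (2 * (vnorm u.1 * vnorm u.2)).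
    apply: Rmult_ge_compat_l; lra.
  lra.
nra.
Qed.

Lemma Rmax_lip a b : Rabs (Rmax 0 a - Rmax 0 b) <= Rabs (a - b).
Proof.
rewrite /Rmax. case: (Rle_dec 0 a); case: (Rle_dec 0 b) => hb ha.
- lra.
- rewrite Rabs_right; last lra. rewrite Rabs_right; lra.
- rewrite Rabs_left1; last lra. rewrite Rabs_left1; lra.
- rewrite Rminus_diag Rabs_R0; exact: Rabs_pos.
Qed.

Definition betax x s := alpha (Phi (Rmax 0 s) x) + ell (Phi (Rmax 0 s) x).

Lemma betax_cont x : Gamma x -> forall s, continuity_pt (betax x) s.
Proof.
move=> hx s. apply: cont_of_eps => eps he.
set s0 := Rmax 0 s. have s0p : 0 <= s0 by apply: Rmax_l.
have U0 : U (Phi s0 x) by exact: gam_U.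
have [da [dap Ha]] := Halphac U0 (half_pos he).
have [dl [dlp Hl]] := Hellc U0 (half_pos he).
have [d1 [d1p H1]] := sol_cont (HPhi hx) s0p (Rmin_pos da dl dap dlp).
exists d1; split => // s' hs'.
have s'0 : 0 <= Rmax 0 s' by apply: Rmax_l.
have hc := H1 (Rmax 0 s') s'0 ltac:(have := Rmax_lip s' s; rewrite -/s0; lra).
have U' : U (Phi (Rmax 0 s') x) by exact: gam_U.
have := Ha _ U' ltac:(have := Rmin_l da dl; lra).
have := Hl _ U' ltac:(have := Rmin_r da dl; lra).
rewrite /betax -/s0.
move=> q1 q2.
have := Rabs_triang (alpha (Phi (Rmax 0 s') x) - alpha (Phi s0 x)) (ell (Phi (Rmax 0 s') x) - ell (Phi s0 x)).
have -> : alpha (Phi (Rmax 0 s') x) - alpha (Phi s0 x) + (ell (Phi (Rmax 0 s') x) - ell (Phi s0 x))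
  = alpha (Phi (Rmax 0 s') x) + ell (Phi (Rmax 0 s') x) - (alpha (Phi s0 x) + ell (Phi s0 x)) by ring.
lra.
Qed.

Lemma deriv_L (u : R -> X n m) (du : X n m) t :
  (forall i, derivable_pt_lim (fun s => (u s).1 i) t (du.1 i)) ->
  (forall j, derivable_pt_lim (fun s => (u s).2 j) t (du.2 j)) ->
  derivable_pt_lim (fun s => Lcone (u s) (@xzero n m)) t (2 * (vdot (u t).1 du.1 - vdot (u t).2 du.2)).
Proof.
move=> h1 h2.
have -> : (fun s => Lcone (u s) (@xzero n m)) = fun s => vdot (u s).1 (u s).1 - vdot (u s).2 (u s).2.
  apply: functional_extensionality => s; exact: Lcone_zero.
apply: dlim_eq. apply: derivable_pt_lim_minus; apply: deriv_vdot; eauto.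
rewrite (vdot_comm du.1) (vdot_comm du.2); ring.
Qed.

Definition varsol x (u : R -> X n m) := forall t, 0 < t ->
  (forall i, derivable_pt_lim (fun s => (u s).1 i) t ((DFp (Phi t x) (u t)).1 i)) /\
  (forall j, derivable_pt_lim (fun s => (u s).2 j) t ((DFp (Phi t x) (u t)).2 j)).

Lemma varsol_Q x v : Gamma x -> varsol x (fun t => Qv t x v).
Proof. move=> hx t ht; exact: (proj1 (HQ v hx) t ht). Qed.

Lemma varsol_sub x u w : varsol x u -> varsol x w -> varsol x (fun t => xsub (u t) (w t)).
Proof.
move=> hu hw t ht. have [a1 b1] := hu t ht. have [a2 b2] := hw t ht.
rewrite DF_sub. split => i.
  exact: (derivable_pt_lim_minus _ _ _ _ _ (a1 i) (a2 i)).
exact: (derivable_pt_lim_minus _ _ _ _ _ (b1 i) (b2 i)).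
Qed.

Definition Kd x (W : R -> R) (u : R -> X n m) t :=
  (2 * (vdot (u t).1 (DFp (Phi t x) (u t)).1 - vdot (u t).2 (DFp (Phi t x) (u t)).2) - betax x t * Lcone (u t) (@xzero n m)) * W t.

Lemma K_deriv x W T u : Gamma x -> varsol x u ->
  (forall t, 0 <= t <= T -> derivable_pt_lim W t (- betax x t * W t)) -> (forall t, 0 < W t) ->
  forall t, 0 < t <= T -> derivable_pt_lim (fun s => Lcone (u s) (@xzero n m) * W s) t (Kd x W u t)
     /\ Kd x W u t >= c1 * W t * xsq (u t).
Proof.
move=> hx hu hW Wp t ht. have [a b] := hu t (proj1 ht).
split.
  apply: dlim_eq. apply: derivable_pt_lim_mult; [apply: deriv_L; [exact: a| exact: b] | apply: hW; lra].
  rewrite /Kd; ring.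
have := var_ineq (u t) (gam_U hx (Rlt_le _ _ (proj1 ht))).
rewrite /Kd /betax Rmax_right; last lra.
have := Wp t. move=> wp h. have := Rmult_ge_compat_r (W t) _ _ ltac:(lra) h. lra.
Qed.

Lemma rc_L (u : R -> X n m) : (forall eps, 0 < eps -> exists delta, 0 < delta /\ forall t, 0 <= t < delta -> xnorm (xsub (u t) (u 0)) < eps) ->
  rc (fun t => Lcone (u t) (@xzero n m)).
Proof.
move=> Hd0 e he. set a := xnorm (u 0). have ha : 0 <= a by exact: xnorm_nonneg.
set e1 := Rmin 1 (e / (2 * (2 * a + 1) + 1)).
have e1p : 0 < e1 by apply: Rmin_pos; [lra| apply: Rdiv_lt_0_compat; lra].
have [d [dp Hd]] := Hd0 e1 e1p.
exists d; split => // t ht.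
have h1 : xnorm (xsub (u t) (u 0)) < e1 by apply: Hd.
have := L_diff (u t) (u 0).
have hu : xnorm (u t) <= a + e1 by have := xnorm_tri (u t) (u 0) (@xzero n m); rewrite !xsub_zero /a; lra.
have f1 : e1 <= 1 by apply: Rmin_l.
have f2 : e1 <= e / (2 * (2 * a + 1) + 1) by apply: Rmin_r.
have f3 : e / (2 * (2 * a + 1) + 1) * (2 * (2 * a + 1) + 1) = e by field; lra.
have := xnorm_nonneg (xsub (u t) (u 0)). have := xnorm_nonneg (u t).
move=> p1 p2 h2. apply: Rle_lt_trans h2 _.
have : 2 * xnorm (xsub (u t) (u 0)) * (xnorm (u t) + a) <= 2 * e1 * (2 * a + 1).
  have : xnorm (u t) + a <= 2 * a + 1 by lra. nra.
have : 2 * e1 * (2 * a + 1) < e.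
  have : e1 * (2 * (2 * a + 1) + 1) <= e by nra. nra.
rewrite /a; lra.
Qed.

Lemma sol_rc0 (u : R -> X n m) V : solves_nonneg u V ->
  forall eps, 0 < eps -> exists delta, 0 < delta /\ forall t, 0 <= t < delta -> xnorm (xsub (u t) (u 0)) < eps.
Proof.
move=> hs e he. have [d [dp Hd]] := sol_cont hs (Rle_refl 0) he.
exists d; split => // t ht; apply: Hd; [lra| rewrite Rminus_0_r Rabs_right; lra].
Qed.

Lemma sub_rc0 (u w : R -> X n m) V1 V2 : solves_nonneg u V1 -> solves_nonneg w V2 ->
  forall eps, 0 < eps -> exists delta, 0 < delta /\ forall t, 0 <= t < delta -> xnorm (xsub (xsub (u t) (w t)) (xsub (u 0) (w 0))) < eps.
Proof.
move=> hu hw e he.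
have [d1 [d1p H1]] := sol_rc0 hu (half_pos he).
have [d2 [d2p H2]] := sol_rc0 hw (half_pos he).
exists (Rmin d1 d2); split; first by apply: Rmin_pos.
move=> t ht. have := xsub4 (u t) (w t) (u 0) (w 0).
have := H1 t ltac:(have := Rmin_l d1 d2; lra). have := H2 t ltac:(have := Rmin_r d1 d2; lra). lra.
Qed.

Variable Hm : X n m -> vec m -> vec n.
Hypothesis HT : forall x, Gamma x -> forall v : X n m,
     (forall t, 0 <= t -> Lcone (Qv t x v) (@xzero n m) <= 0) <->
     (forall i, v.1 i = Hm x v.2 i).

Lemma L_le_xsq (u : X n m) : Lcone u (@xzero n m) <= xsq u.
Proof. rewrite Lcone_zero /xsq. have := vdot_self_nonneg u.2. lra. Qed.

Lemma Q_bound x T M : Gamma x -> 0 <= T -> 0 <= M -> (forall s, 0 <= s <= T -> JB (Phi s x) <= M) ->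
  forall B v, 0 <= B -> xnorm v <= B -> xnorm (Qv T x v) <= B * exp (M * T).
Proof.
move=> hx hT hM HM B v hB hv.
have h := Q_growth hx hT HM v (conj hT (Rle_refl T)).
apply: xnorm_le_of_sq; first by have := exp_pos (M * T); nra.
have e1 : exp (2 * M * T) = exp (M * T) * exp (M * T) by rewrite -exp_plus; congr exp; ring.
have : xsq v <= B * B by rewrite -xnorm_sq; have := xnorm_nonneg v; nra.
have := exp_pos (2 * M * T). have := exp_pos (M * T). move=> a b' c.
apply: Rle_trans h _. rewrite e1. have := xsq_nonneg v. nra.
Qed.

Lemma main_cont zz x : Gamma x -> forall eps, 0 < eps -> exists delta, 0 < delta /\
  forall y, Gamma y -> xnorm (xsub y x) < delta -> vnorm (vsub (Hm y zz) (Hm x zz)) < eps.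
Proof.
move=> hx eps0 he0.
set ep := eps0 / 2. have epp : 0 < ep by rewrite /ep; lra.
set Z := vnorm zz. have Zp : 0 <= Z by exact: vnorm_nonneg.
have cee : 0 < c1 * ep * ep by apply: Rmult_lt_0_compat => //; apply: Rmult_lt_0_compat.
set T := 2 * (2 * Z * Z + 1) / (c1 * ep * ep) + 1.
have hT0 : 0 < T.
  rewrite /T. have : 0 <= 2 * (2 * Z * Z + 1) / (c1 * ep * ep).
    apply: Rmult_le_pos; [nra| left; apply: Rinv_0_lt_compat => //].
  lra.
have hT : 0 <= T by lra.
have hTbig : c1 * ep * ep * T / 2 - 2 * Z * Z >= 1.
  have e : c1 * ep * ep * T / 2 = (2 * Z * Z + 1) + c1 * ep * ep / 2 by rewrite /T; field; lra.
  rewrite e. lra.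
have [W [Wp [W0 dW]]] := weight hT (betax_cont hx).
set mg := / W T. have mgp : 0 < mg by apply: Rinv_0_lt_compat.
have [r0 [r0p [M0 HM0]]] := jac_tube hx hT Rlt_0_1.
have M0p : 0 <= M0.
  have [_ [_ h]] := HM0 0 ltac:(lra) (Phi 0 x) ltac:(rewrite xsub_self; lra).
  have := JB_nonneg (Phi 0 x); lra.
have HMx : forall s, 0 <= s <= T -> JB (Phi s x) <= M0.
  move=> s hs; exact: (proj2 (proj2 (HM0 s hs (Phi s x) ltac:(rewrite xsub_self; lra)))).
set B := 2 * Z + 1. have hB : 0 <= B by rewrite /B; lra.
set Pb := B * exp (M0 * T). have Pbp : 0 <= Pb by rewrite /Pb; have := exp_pos (M0 * T); nra.
set eq := Rmin 1 (mg / (2 * (2 * Pb + 1))).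
have eqp : 0 < eq by apply: Rmin_pos; [lra| apply: Rdiv_lt_0_compat; lra].
have eq1 : eq <= 1 by apply: Rmin_l.
have eq2 : 2 * eq * (2 * Pb + 1) <= mg.
  have : eq <= mg / (2 * (2 * Pb + 1)) by apply: Rmin_r.
  move=> h. have e : mg / (2 * (2 * Pb + 1)) * (2 * (2 * Pb + 1)) = mg by field; lra.
  have := Rmult_le_compat_r (2 * (2 * Pb + 1)) _ _ ltac:(lra) h. lra.
have [d [dp Hd]] := Q_cont hx hT hB eqp.
exists d; split => // y hy hyx.
set v' : X n m := (Hm y zz, zz). set v : X n m := (Hm x zz, zz).
have Ly : forall t, 0 <= t -> Lcone (Qv t y v') (@xzero n m) <= 0 by apply/(HT hy).
have Lx : forall t, 0 <= t -> Lcone (Qv t x v) (@xzero n m) <= 0 by apply/(HT hx).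
have Lv'0 : vdot (Hm y zz) (Hm y zz) <= vdot zz zz.
  have := Ly 0 (Rle_refl 0). rewrite HQ0 // Lcone_zero /=. lra.
have Lv0 : vdot (Hm x zz) (Hm x zz) <= vdot zz zz.
  have := Lx 0 (Rle_refl 0). rewrite HQ0 // Lcone_zero /=. lra.
have zsq : vdot zz zz = Z * Z by rewrite /Z vnorm_sq.
have hv' : xnorm v' <= B.
  apply: Rle_trans (xnorm_le _) _. rewrite /= -/Z.
  have : vnorm (Hm y zz) <= Z by apply: vnorm_le_of_sq => //; lra.
  rewrite /B; lra.
have hp : xnorm (Qv T x v') <= Pb by exact: (Q_bound hx hT M0p HMx hB hv').
case: (Rlt_le_dec (vnorm (vsub (Hm y zz) (Hm x zz))) ep) => hD; first by rewrite /ep in hD; lra.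
exfalso.
set p := fun t => Qv t x v'. set q := fun t => Qv t x v. set w := fun t => xsub (p t) (q t).
have sp : varsol x p by exact: varsol_Q.
have sq : varsol x q by exact: varsol_Q.
have sw : varsol x w by exact: varsol_sub.
have rcW : rc W by apply: rc_of_cont; apply: derivable_continuous_pt; exists (- betax x 0 * W 0); apply: dW; lra.
have Kw : forall t, 0 <= t <= T -> Lcone (w t) (@xzero n m) * W t >= ep * ep.
  move=> t ht.
  have Kd_nonneg : forall s, 0 < s < t -> 0 <= Kd x W w s.
    move=> s hs. have k := proj2 (K_deriv hx sw dW Wp (t := s) ltac:(lra)).
    have : 0 <= c1 * W s * xsq (w s).
      apply: Rmult_le_pos; [apply: Rmult_le_pos; [lra| exact: Rlt_le (Wp s)] | exact: xsq_nonneg].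
    lra.
  have hnd := @nondecr (fun s => Lcone (w s) (@xzero n m) * W s) (Kd x W w) t (proj1 ht)
    (fun s hs => proj1 (K_deriv hx sw dW Wp (t := s) ltac:(lra)))
    (fun s hs => Kd_nonneg s hs)
    (rc_mult (rc_L (sub_rc0 (HQ v' hx) (HQ v hx))) rcW).
  have e0 : Lcone (w 0) (@xzero n m) * W 0 = vdot (vsub (Hm y zz) (Hm x zz)) (vsub (Hm y zz) (Hm x zz)).
    rewrite W0 Rmult_1_r /w /p /q !HQ0 // Lcone_zero /= !vdot_subl !vdot_subr. ring.
  rewrite e0 -vnorm_sq in hnd. have := vnorm_nonneg (vsub (Hm y zz) (Hm x zz)). nra.
set h := fun s => (Lcone (p s) (@xzero n m) * W s + Lcone (q s) (@xzero n m) * W s) + (- (c1 * ep * ep / 2)) * s.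
set h' := fun s => (Kd x W p s + Kd x W q s) + (- (c1 * ep * ep / 2)).
have dh : forall s, 0 < s <= T -> derivable_pt_lim h s (h' s).
  move=> s hs. apply: derivable_pt_lim_plus.
    apply: derivable_pt_lim_plus; [exact: (proj1 (K_deriv hx sp dW Wp hs)) | exact: (proj1 (K_deriv hx sq dW Wp hs))].
  have := derivable_pt_lim_scal id (- (c1 * ep * ep / 2)) s 1 (derivable_pt_lim_id s).
  rewrite Rmult_1_r. by [].
have hh : forall s, 0 < s < T -> 0 <= h' s.
  move=> s hs. have k1 := proj2 (K_deriv hx sp dW Wp (t := s) ltac:(lra)).
  have k2 := proj2 (K_deriv hx sq dW Wp (t := s) ltac:(lra)).
  have k3 := Kw s ltac:(lra).
  have k4 := L_le_xsq (w s).
  have k5 : xsq (w s) <= 2 * xsq (p s) + 2 * xsq (q s).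
    rewrite /w xsub_add. apply: Rle_trans (xsq_add _ _) _.
    have -> : xsq (xscal (-1) (q s)) = xsq (q s) by rewrite /xsq /xscal /= !vdot_scall !vdot_scalr; ring.
    lra.
  have ws := Wp s.
  have : ep * ep <= W s * xsq (w s).
    have := Rmult_le_compat_l (W s) _ _ (Rlt_le _ _ ws) k4. lra.
  move=> k6. rewrite /h'.
  have : c1 * (W s * xsq (w s)) <= c1 * (W s * (2 * xsq (p s) + 2 * xsq (q s))).
    apply: Rmult_le_compat_l; [lra| apply: Rmult_le_compat_l; lra].
  have : c1 * (ep * ep) <= c1 * (W s * xsq (w s)) by apply: Rmult_le_compat_l; lra.
  lra.
have rch : rc h.
  apply: rc_plus.
    apply: rc_plus; apply: rc_mult => //; apply: rc_L; exact: sol_rc0 (HQ _ hx).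
  apply: rc_scal. apply: rc_of_cont. exact: derivable_continuous_pt (derivable_pt_id 0).
have hnd := nondecr hT dh hh rch.
have h0 : h 0 >= - 2 * (Z * Z).
  rewrite /h /p /q !HQ0 // W0 !Rmult_1_r Rmult_0_r Rplus_0_r !Lcone_zero /=.
  have := vdot_self_nonneg (Hm y zz). have := vdot_self_nonneg (Hm x zz). lra.
have hq : Lcone (q T) (@xzero n m) * W T <= 0.
  have := Lx T hT. have := Wp T. rewrite /q. nra.
have hpT : Lcone (p T) (@xzero n m) * W T >= 1.
  rewrite /h in hnd h0. nra.
have hpm : Lcone (p T) (@xzero n m) >= mg.
  rewrite /mg. have := Wp T. move=> wp.
  apply: Rle_ge. apply: (Rmult_le_reg_r (W T)) => //. rewrite Rinv_l; lra.
have he := Hd y hy hyx v' hv'.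
have hr := Ly T hT.
have hLd := L_diff (Qv T y v') (Qv T x v').
have hr2 : xnorm (Qv T y v') <= Pb + 1.
  have := xnorm_tri (Qv T y v') (Qv T x v') (@xzero n m). rewrite !xsub_zero. lra.
have : 2 * xnorm (xsub (Qv T y v') (Qv T x v')) * (xnorm (Qv T y v') + xnorm (Qv T x v')) < mg.
  have := xnorm_nonneg (xsub (Qv T y v') (Qv T x v')).
  have := xnorm_nonneg (Qv T y v'). have := xnorm_nonneg (Qv T x v').
  move=> a b c.
  have : xnorm (Qv T y v') + xnorm (Qv T x v') <= 2 * Pb + 1 by lra.
  move=> hs. have : 2 * xnorm (xsub (Qv T y v') (Qv T x v')) * (xnorm (Qv T y v') + xnorm (Qv T x v')) <= 2 * xnorm (xsub (Qv T y v') (Qv T x v')) * (2 * Pb + 1).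
    apply: Rmult_le_compat_l; lra.
  have : 2 * xnorm (xsub (Qv T y v') (Qv T x v')) * (2 * Pb + 1) < 2 * eq * (2 * Pb + 1).
    apply: Rmult_lt_compat_r; lra.
  lra.
move=> hlt.
have := Rle_abs (Lcone (Qv T x v') (@xzero n m) - Lcone (Qv T y v') (@xzero n m)).
rewrite -Rabs_Ropp Ropp_minus_distr. rewrite /p in hpm. lra.
Qed.

End P.

Unset Implicit Arguments.

Theorem lemma2p10 (n m : nat)
  (f : X n m -> vec n) (g : X n m -> vec m)
  (U Gamma : X n m -> Prop)
  (* Hypothesis 1 *)
  (HUopen : is_open U) (HUconv : is_convex U)
  (d : R) (Hd : 0 < d)
  (Hcone : forall x x', U x -> U x' -> Lcone x' x >= 0 -> ball_d d x x')
  (* Hypothesis 2: f, g are C^1 on U with partial Jacobians Daf, Dzf, Dag, Dzg *)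
  (Daf : X n m -> mat n n) (Dzf : X n m -> mat n m)
  (Dag : X n m -> mat m n) (Dzg : X n m -> mat m m)
  (Hfdiff : forall x, U x ->
     frechet_at f (fun v => vadd (mapp (Daf x) v.1) (mapp (Dzf x) v.2)) x)
  (Hgdiff : forall x, U x ->
     frechet_at g (fun v => vadd (mapp (Dag x) v.1) (mapp (Dzg x) v.2)) x)
  (HDafc : forall i j, cont_on U (fun x => Daf x i j))
  (HDzfc : forall i j, cont_on U (fun x => Dzf x i j))
  (HDagc : forall i j, cont_on U (fun x => Dag x i j))
  (HDzgc : forall i j, cont_on U (fun x => Dzg x i j))
  (alpha ell : X n m -> R) (c1 : R)
  (Halphac : cont_on U alpha) (Hellc : cont_on U ell)
  (Halpha : forall x, U x -> 0 < alpha x)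
  (Hell : forall x, U x -> 0 <= ell x)
  (Hc1 : 0 < c1)
  (Hdaf : forall x, U x -> forall a' : vec n,
     vdot a' (mapp (Daf x) a') >= alpha x * vnorm a' ^ 2)
  (Hdzg : forall x, U x -> forall z' : vec m,
     vdot z' (mapp (Dzg x) z') <= ell x * vnorm z' ^ 2)
  (Hgap : forall x, U x ->
     alpha x >= ell x + opnorm (Dzf x) + opnorm (Dag x) + c1)
  (* the flow Phi of  a' = f(a,z), z' = g(a,z), for initial data in Gamma *)
  (Phi : R -> X n m -> X n m)
  (HPhi0 : forall x, Gamma x -> Phi 0 x = x)
  (HPhi : forall x, Gamma x ->
     solves_nonneg (fun t => Phi t x) (fun _ p => (f p, g p)))
  (* Hypothesis 3 *)
  (HGU : forall x, Gamma x -> U x)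
  (HGinv : forall x t, Gamma x -> 0 <= t -> Gamma (Phi t x))
  (HGproj : forall z : vec m,
     (exists x, Gamma x /\ x.2 = z) <-> (exists x, U x /\ x.2 = z))
  (* Q t x v = Q(t,x) v, the fundamental matrix solution of the variational
     equation  y' = DF(Phi(t,x)) y,  applied to v *)
  (Q : R -> X n m -> X n m -> X n m)
  (HQ0 : forall x v, Gamma x -> Q 0 x v = v)
  (HQ : forall x v, Gamma x ->
     solves_nonneg (fun t => Q t x v)
       (fun t y => DFapp Daf Dzf Dag Dzg (Phi t x) y))
  (* H(x) is the linear map whose graph is T(x) *)
  (H : X n m -> vec m -> vec n)
  (HT : forall x, Gamma x -> forall v : X n m,
     (forall t, 0 <= t -> Lcone (Q t x v) (@xzero n m) <= 0) <->
     (forall i, v.1 i = H x v.2 i)) :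
  forall zz : vec m, cont_on_vec Gamma (fun x => H x zz).
Proof.
  move=> zz x hx. exact: (main_cont HUopen Hfdiff Hgdiff HDafc HDzfc HDagc HDzgc HPhi0 HPhi HGU HGinv HQ0 HQ Halphac Hellc Hc1 Hdaf Hdzg Hgap HT zz hx).
Qed.
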